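(* Let $H$ be a locally quasi-convex abelian topological group and $h:\mathbb{R}\to H$ a continuous homomorphism. Define $T_H:\mathbb{R}^{(\mathbb{N})}\to L_G(\mathbf{s})\times\mathfrak{F}_0(H)$ by $T_H((x_k))=\big((x_k),(h(x_k))\big)$, and let $\mathcal{T}_H$ be the group topology on $\mathbb{R}^{(\mathbb{N})}$ induced via the injective homomorphism $T_H$ from the product topology. Then $\mathcal{T}_H$ is a locally quasi-convex group topology which is coarser than the box topology on $\mathbb{R}^{(\mathbb{N})}$, finer than $\boldsymbol{\nu}$, and compatible with $\boldsymbol{\nu}$, i.e. $(\mathbb{R}^{(\mathbb{N})},\mathcal{T}_H)$ and $(\mathbb{R}^{(\mathbb{N})},\boldsymbol{\nu})$ have the same continuous characters.
   Context: $\mathbb{R}^{(\mathbb{N})}$ is the space of finitely supported real sequences, $e_n$ the $n$-th unit vector, and $\boldsymbol{\nu}$ the finest locally convex vector topology on $\mathbb{R}^{(\mathbb{N})}$ in which $e_n\to0$; $L_G(\mathbf{s})=(\mathbb{R}^{(\mathbb{N})},\boldsymbol{\nu})$ is the Graev free locally convex space over $\mathbf{s}=\{1/n\}\cup\{0\}$. The box topology on $\mathbb{R}^{(\mathbb{N})}$ is the topology induced from the box product topology on $\mathbb{R}^{\mathbb{N}}$. For an abelian topological group $G$, $c_0(G)$ is the group of sequences $(x_n)\in G^{\mathbb{N}}$ with $x_n\to0$, and $\mathfrak{F}_0(G)$ is $c_0(G)$ with the uniform topology, whose base at $0$ is $\{c_0(G)\cap V^{\mathbb{N}} : V \text{ a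 neighborhood of } 0 \text{ in } G\}$. Let $\mathbb{S}$ be the unit circle, $\mathbb{S}_+=\{z\in\mathbb{S}:\mathrm{Re}\,z\ge0\}$; a character is a continuous homomorphism into $\mathbb{S}$. A subset $A$ of an abelian topological group $G$ is quasi-convex if for every $g\notin A$ there is a character $\chi$ with $\chi(A)\subseteq\mathbb{S}_+$ and $\chi(g)\notin\mathbb{S}_+$; $G$ is locally quasi-convex if it has a base at $0$ of quasi-convex sets. *)

(* Defs.v *)
From Stdlib Require Import Reals Lra Lia List.
Open Scope R_scope.

Definition is_topology {X : Type} (tau : (X -> Prop) -> Prop) : Prop :=
  tau (fun _ => True) /\
  (forall F : (X -> Prop) -> Prop, (forall U, F U -> tau U) ->
      tau (fun x => exists U, F U /\ U x)) /\
  (forall U V, tau U -> tau V -> tau (fun x => U x /\ V x)).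

Definition nbhd {X : Type} (tau : (X -> Prop) -> Prop) (x : X) (N : X -> Prop) : Prop :=
  exists O, tau O /\ O x /\ forall y, O y -> N y.

Definition cont2 {X : Type} (tau : (X -> Prop) -> Prop) (f : X -> X -> X) : Prop :=
  forall x y W, tau W -> W (f x y) ->
    exists U V, tau U /\ tau V /\ U x /\ V y /\
      forall x' y', U x' -> V y' -> W (f x' y').

Definition cont1 {X : Type} (tau : (X -> Prop) -> Prop) (f : X -> X) : Prop :=
  forall x W, tau W -> W (f x) ->
    exists U, tau U /\ U x /\ forall x', U x' -> W (f x').

Definition is_abelian_group {G : Type} (add : G -> G -> G) (opp : G -> G) (zero : G) : Prop :=
  (forall x y z, add x (add y z) = add (add x y) z) /\
  (forall x y, add x y = add y x) /\
  (forall x, add x zero = x) /\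
  (forall x, add x (opp x) = zero).

Definition is_group_topology {G : Type} (add : G -> G -> G) (opp : G -> G)
  (tau : (G -> Prop) -> Prop) : Prop :=
  is_topology tau /\ cont2 tau add /\ cont1 tau opp.

Definition is_abelian_topgroup {G : Type} (add : G -> G -> G) (opp : G -> G) (zero : G)
  (tau : (G -> Prop) -> Prop) : Prop :=
  is_abelian_group add opp zero /\ is_group_topology add opp tau.

Definition cmul (p q : R * R) : R * R :=
  (fst p * fst q - snd p * snd q, fst p * snd q + snd p * fst q).

Definition on_circle (p : R * R) : Prop := fst p ^ 2 + snd p ^ 2 = 1.

Definition in_Splus (p : R * R) : Prop := 0 <= fst p.

Definition is_character {G : Type} (add : G -> G -> G) (tau : (G -> Prop) -> Prop)
  (chi : G -> R * R) : Prop :=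
  (forall x, on_circle (chi x)) /\
  (forall x y, chi (add x y) = cmul (chi x) (chi y)) /\
  (forall x eps, 0 < eps -> exists O, tau O /\ O x /\
     forall y, O y -> (fst (chi y) - fst (chi x)) ^ 2 + (snd (chi y) - snd (chi x)) ^ 2 < eps ^ 2).

Definition quasi_convex {G : Type} (add : G -> G -> G) (tau : (G -> Prop) -> Prop)
  (A : G -> Prop) : Prop :=
  forall g, ~ A g -> exists chi, is_character add tau chi /\
    (forall a, A a -> in_Splus (chi a)) /\ ~ in_Splus (chi g).

Definition locally_quasi_convex {G : Type} (add : G -> G -> G) (zero : G)
  (tau : (G -> Prop) -> Prop) : Prop :=
  forall U, nbhd tau zero U ->
    exists V, nbhd tau zero V /\ quasi_convex add tau V /\ forall x, V x -> U x.

Definition RN : Type := { x : nat -> R | exists N, forall n, (N <= n)%nat -> x n = 0 }.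

Definition RNv (x : RN) : nat -> R := proj1_sig x.

Lemma RN_add_fin (x y : RN) :
  exists N, forall n, (N <= n)%nat -> RNv x n + RNv y n = 0.
Proof.
  destruct x as [x [N1 H1]], y as [y [N2 H2]]; simpl.
  exists (N1 + N2)%nat; intros n Hn. rewrite H1, H2 by lia. lra.
Qed.
Definition RN_add (x y : RN) : RN := exist _ (fun n => RNv x n + RNv y n) (RN_add_fin x y).

Lemma RN_opp_fin (x : RN) : exists N, forall n, (N <= n)%nat -> - RNv x n = 0.
Proof.
  destruct x as [x [N1 H1]]; simpl. exists N1; intros n Hn. rewrite H1 by lia. lra.
Qed.
Definition RN_opp (x : RN) : RN := exist _ (fun n => - RNv x n) (RN_opp_fin x).

Lemma RN_scal_fin (t : R) (x : RN) : exists N, forall n, (N <= n)%nat -> t * RNv x n = 0.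
Proof.
  destruct x as [x [N1 H1]]; simpl. exists N1; intros n Hn. rewrite H1 by lia. lra.
Qed.
Definition RN_scal (t : R) (x : RN) : RN := exist _ (fun n => t * RNv x n) (RN_scal_fin t x).

Lemma RN_zero_fin : exists N, forall n, (N <= n)%nat -> (fun _ : nat => 0) n = 0.
Proof. exists 0%nat; reflexivity. Qed.
Definition RN_zero : RN := exist _ (fun _ => 0) RN_zero_fin.

Lemma RN_unit_fin (k : nat) :
  exists N, forall n, (N <= n)%nat -> (if Nat.eqb n k then 1 else 0) = 0.
Proof.
  exists (S k); intros n Hn. destruct (Nat.eqb_spec n k); [lia | reflexivity].
Qed.
Definition RN_unit (k : nat) : RN :=
  exist _ (fun n => if Nat.eqb n k then 1 else 0) (RN_unit_fin k).

Definition convex_RN (C : RN -> Prop) : Prop :=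
  forall x y t, C x -> C y -> 0 <= t <= 1 ->
    C (RN_add (RN_scal t x) (RN_scal (1 - t) y)).

Definition is_lc_vector_topology_en0 (tau : (RN -> Prop) -> Prop) : Prop :=
  is_topology tau /\
  cont2 tau RN_add /\
  (forall t x W, tau W -> W (RN_scal t x) ->
     exists d U, 0 < d /\ tau U /\ U x /\
       forall t' x', Rabs (t' - t) < d -> U x' -> W (RN_scal t' x')) /\
  (forall U, nbhd tau RN_zero U ->
     exists C, nbhd tau RN_zero C /\ convex_RN C /\ forall x, C x -> U x) /\
  (forall U, nbhd tau RN_zero U ->
     exists N, forall n, (N <= n)%nat -> U (RN_unit n)).

(* nu: the finest locally convex vector topology in which e_n -> 0, i.e. the
   supremum of all such topologies: the topology generated by their union
   (open sets = unions of finite intersections of sets open in one of them). *)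
Definition nu_open (U : RN -> Prop) : Prop :=
  forall x, U x ->
    exists l : list (((RN -> Prop) -> Prop) * (RN -> Prop)),
      (forall p, In p l -> is_lc_vector_topology_en0 (fst p) /\ (fst p) (snd p) /\ snd p x) /\
      (forall y, (forall p, In p l -> snd p y) -> U y).

Definition box_open (U : RN -> Prop) : Prop :=
  forall x, U x -> exists eps : nat -> R, (forall n, 0 < eps n) /\
    forall y, (forall n, Rabs (RNv y n - RNv x n) < eps n) -> U y.

Section F0.
Context {H : Type} (addH : H -> H -> H) (zeroH : H) (tauH : (H -> Prop) -> Prop).

Definition is_c0 (b : nat -> H) : Prop :=
  forall U, nbhd tauH zeroH U -> exists N, forall n, (N <= n)%nat -> U (b n).

(* B (intersected with c_0(H)) is open in the uniform topology of F_0(H),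
   whose base at 0 is { c_0(H) /\ V^N : V neighbourhood of 0 in H }. *)
Definition F0_open (B : (nat -> H) -> Prop) : Prop :=
  forall b, is_c0 b -> B b -> exists V, nbhd tauH zeroH V /\
    forall y, is_c0 y -> (forall n, V (y n)) -> B (fun n => addH (b n) (y n)).

(* open sets of the product L_G(s) x F_0(H), viewed as relations on RN x c_0(H) *)
Definition prod_open (W : RN -> (nat -> H) -> Prop) : Prop :=
  forall a b, is_c0 b -> W a b ->
    exists A B, nu_open A /\ A a /\ F0_open B /\ B b /\
      forall a' b', is_c0 b' -> A a' -> B b' -> W a' b'.

Definition T_H2 (h : R -> H) (x : RN) : nat -> H := fun n => h (RNv x n).

Definition tau_TH (h : R -> H) (U : RN -> Prop) : Prop :=
  exists W, prod_open W /\ forall x, U x <-> W x (T_H2 h x).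
End F0.

(* Main.v *)
Require Import Defs.
From Stdlib Require Import Reals Lra Lia List ZArith ClassicalEpsilon FunctionalExtensionality ProofIrrelevance Classical.
Open Scope R_scope.

Lemma RN_ext (x y : RN) : (forall n, RNv x n = RNv y n) -> x = y.
Proof.
  destruct x as [x px], y as [y py]; simpl; intros E.
  assert (x = y) by (apply functional_extensionality; exact E). subst.
  f_equal; apply proof_irrelevance.
Qed.

Definition mkRN (f : nat -> R) (N : nat) (Hf : forall n, (N <= n)%nat -> f n = 0) : RN :=
  exist _ f (ex_intro _ N Hf).

Lemma RNv_mk f N Hf n : RNv (mkRN f N Hf) n = f n.
Proof. reflexivity. Qed.

Definition sb (x : RN) : nat := proj1_sig (constructive_indefinite_description _ (proj2_sig x)).
Lemma sb_spec (x : RN) : forall n, (sb x <= n)%nat -> RNv x n = 0.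
Proof. unfold sb. destruct (constructive_indefinite_description _ _). simpl. exact e. Qed.

Fixpoint psum (f : nat -> R) (n : nat) : R :=
  match n with O => 0 | S m => psum f m + f m end.

Lemma psum_ext f g n : (forall k, (k < n)%nat -> f k = g k) -> psum f n = psum g n.
Proof.
  induction n; simpl; intros E; auto.
  rewrite IHn by (intros; apply E; lia). rewrite E by lia. auto.
Qed.

Lemma psum_zero_tail f N : (forall n, (N <= n)%nat -> f n = 0) ->
  forall m, psum f (N + m) = psum f N.
Proof.
  intros Hf m; induction m; simpl.
  - rewrite Nat.add_0_r; auto.
  - rewrite Nat.add_succ_r; simpl. rewrite IHm, Hf by lia. lra.
Qed.

Lemma psum_zero_tail' f N M : (forall n, (N <= n)%nat -> f n = 0) -> (N <= M)%nat ->
  psum f M = psum f N.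
Proof. intros Hf HM. replace M with (N + (M - N))%nat by lia. apply psum_zero_tail; auto. Qed.

Lemma psum_plus f g n : psum (fun k => f k + g k) n = psum f n + psum g n.
Proof. induction n; simpl; lra. Qed.
Lemma psum_scal c f n : psum (fun k => c * f k) n = c * psum f n.
Proof. induction n; simpl; try lra. Qed.
Lemma psum_le f g n : (forall k, (k < n)%nat -> f k <= g k) -> psum f n <= psum g n.
Proof. induction n; simpl; intros; try lra. assert (f n <= g n) by (apply H; lia).
  assert (psum f n <= psum g n) by (apply IHn; intros; apply H; lia). lra. Qed.
Lemma psum_nonneg f n : (forall k, 0 <= f k) -> 0 <= psum f n.
Proof. induction n; simpl; intros Hf; try lra. specialize (IHn Hf). specialize (Hf n). lra. Qed.
Lemma psum_abs f n : Rabs (psum f n) <= psum (fun k => Rabs (f k)) n.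
Proof. induction n; simpl. rewrite Rabs_R0; lra.
  eapply Rle_trans. apply Rabs_triang. lra. Qed.
Lemma psum_zero_each f n : (forall k, 0 <= f k) -> psum f n = 0 -> forall k, (k < n)%nat -> f k = 0.
Proof.
  induction n; simpl; intros Hp E k Hk; [lia|].
  assert (0 <= psum f n) by (apply psum_nonneg; auto).
  pose proof (Hp n).
  destruct (Nat.eq_dec k n). subst; lra. apply IHn; auto; try lra; lia.
Qed.

Definition pse (F : nat -> R -> R) (z : RN) : R := psum (fun k => F k (RNv z k)) (sb z).

Lemma pse_eq F z M : (forall k, F k 0 = 0) -> (forall n, (M <= n)%nat -> RNv z n = 0) ->
  pse F z = psum (fun k => F k (RNv z k)) M.
Proof.
  intros F0 HM. unfold pse.
  rewrite <- (psum_zero_tail' (fun k => F k (RNv z k)) M (Nat.max M (sb z))).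
  - symmetry. apply psum_zero_tail'. intros n Hn; rewrite sb_spec by lia; auto. lia.
  - intros n Hn; rewrite HM by lia; auto.
  - lia.
Qed.

Definition qw (w : nat -> R) := pse (fun k r => w k * Rabs r).
Definition lin (a : nat -> R) := pse (fun k r => a k * r).

Lemma qw_eq w z M : (forall n, (M <= n)%nat -> RNv z n = 0) ->
  qw w z = psum (fun k => w k * Rabs (RNv z k)) M.
Proof. intros; apply pse_eq; auto. intros; rewrite Rabs_R0; ring. Qed.
Lemma lin_eq a z M : (forall n, (M <= n)%nat -> RNv z n = 0) ->
  lin a z = psum (fun k => a k * RNv z k) M.
Proof. intros; apply pse_eq; auto. intros; ring. Qed.

Lemma supp_add (x y : RN) : forall n, (Nat.max (sb x) (sb y) <= n)%nat -> RNv (RN_add x y) n = 0.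
Proof. intros n Hn; simpl. rewrite !sb_spec by lia; lra. Qed.

Definition nonneg (w : nat -> R) := forall k, 0 <= w k.
Definition tendsto0 (w : nat -> R) := forall eps, 0 < eps -> exists N, forall n, (N <= n)%nat -> Rabs (w n) < eps.

Lemma qw_nonneg w z : nonneg w -> 0 <= qw w z.
Proof. intros Hw. unfold qw, pse. apply psum_nonneg. intros; apply Rmult_le_pos; auto; apply Rabs_pos. Qed.

Lemma qw_add w x y : nonneg w -> qw w (RN_add x y) <= qw w x + qw w y.
Proof.
  intros Hw. set (M := Nat.max (sb x) (sb y)).
  rewrite (qw_eq w (RN_add x y) M) by (apply supp_add).
  rewrite (qw_eq w x M) by (intros; apply sb_spec; lia).
  rewrite (qw_eq w y M) by (intros; apply sb_spec; lia).
  rewrite <- psum_plus. apply psum_le. intros k _. simpl.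
  specialize (Hw k). pose proof (Rabs_triang (RNv x k) (RNv y k)). nra.
Qed.

Lemma qw_scal w t x : qw w (RN_scal t x) = Rabs t * qw w x.
Proof.
  rewrite (qw_eq w (RN_scal t x) (sb x)). rewrite (qw_eq w x (sb x)) by apply sb_spec.
  rewrite <- psum_scal. apply psum_ext. intros; simpl. rewrite Rabs_mult. ring.
  intros n Hn; simpl; rewrite sb_spec by lia; ring.
Qed.

Lemma qw_opp w x : qw w (RN_opp x) = qw w x.
Proof.
  rewrite (qw_eq w (RN_opp x) (sb x)). rewrite (qw_eq w x (sb x)) by apply sb_spec.
  apply psum_ext. intros; simpl. rewrite Rabs_Ropp. ring.
  intros n Hn; simpl; rewrite sb_spec by lia; ring.
Qed.

Lemma qw_zero w : qw w RN_zero = 0.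
Proof. rewrite (qw_eq w RN_zero 0). reflexivity. intros; reflexivity. Qed.

Lemma qw_unit w k : qw w (RN_unit k) = w k.
Proof.
  rewrite (qw_eq w (RN_unit k) (S k)). simpl.
  rewrite (psum_ext _ (fun _ => 0)). 2:{ intros j Hj. destruct (Nat.eqb_spec j k). lia. rewrite Rabs_R0; ring. }
  assert (psum (fun _ => 0) k = 0) by (clear; induction k; simpl; lra).
  rewrite Nat.eqb_refl, Rabs_R1. lra.
  intros n Hn; simpl. destruct (Nat.eqb_spec n k); auto; lia.
Qed.

Lemma lin_add a x y : lin a (RN_add x y) = lin a x + lin a y.
Proof.
  set (M := Nat.max (sb x) (sb y)).
  rewrite (lin_eq a (RN_add x y) M) by (apply supp_add).
  rewrite (lin_eq a x M) by (intros; apply sb_spec; lia).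
  rewrite (lin_eq a y M) by (intros; apply sb_spec; lia).
  rewrite <- psum_plus. apply psum_ext. intros; simpl; ring.
Qed.

Lemma lin_bound a w x : (forall k, Rabs (a k) <= w k) -> Rabs (lin a x) <= qw w x.
Proof.
  intros Ha. unfold lin, qw, pse. eapply Rle_trans. apply psum_abs.
  apply psum_le. intros k _. rewrite Rabs_mult. pose proof (Ha k). pose proof (Rabs_pos (RNv x k)).
  pose proof (Rabs_pos (a k)). nra.
Qed.
Definition RN_sub (y x : RN) := RN_add y (RN_opp x).
Definition ball (w : nat -> R) (x : RN) (r : R) (y : RN) := qw w (RN_sub y x) < r.
Definition tw (w : nat -> R) (U : RN -> Prop) : Prop :=
  forall x, U x -> exists eps, 0 < eps /\ forall y, ball w x eps y -> U y.

Ltac rnext := apply RN_ext; intros; simpl; try ring.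

Lemma sub_tri x y z : RN_sub y x = RN_add (RN_sub y z) (RN_sub z x).
Proof. unfold RN_sub; rnext. Qed.
Lemma sub0 z : RN_sub z RN_zero = z.
Proof. unfold RN_sub; rnext. Qed.

Section TW.
Variable w : nat -> R.
Hypothesis Hw : nonneg w.
Hypothesis Hw0 : tendsto0 w.

Lemma qw_tri x y z : qw w (RN_sub y x) <= qw w (RN_sub y z) + qw w (RN_sub z x).
Proof. rewrite (sub_tri x y z). apply qw_add; auto. Qed.

Lemma qw_sym x y : qw w (RN_sub y x) = qw w (RN_sub x y).
Proof. replace (RN_sub y x) with (RN_opp (RN_sub x y)) by (unfold RN_sub; rnext). apply qw_opp. Qed.

Lemma ball_open x r : tw w (ball w x r).
Proof.
  intros z Hz. unfold ball in *. exists (r - qw w (RN_sub z x)). split. lra.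
  intros y Hy. pose proof (qw_tri x y z). lra.
Qed.

Lemma ball_center x r : 0 < r -> ball w x r x.
Proof. intros. unfold ball. replace (RN_sub x x) with RN_zero by (unfold RN_sub; rnext).
  rewrite qw_zero; auto. Qed.

Lemma tw_lc : is_lc_vector_topology_en0 (tw w).
Proof.
  split; [|split; [|split; [|split]]].
  - split; [|split].
    + intros x _. exists 1. split; auto; lra.
    + intros F HF x [U [FU Ux]]. destruct (HF U FU x Ux) as [e [He Hb]].
      exists e; split; auto. intros y Hy. exists U; split; auto.
    + intros U V HU HV x [Ux Vx]. destruct (HU x Ux) as [e1 [He1 H1]]. destruct (HV x Vx) as [e2 [He2 H2]].
      exists (Rmin e1 e2). split. apply Rmin_pos; auto.
      intros y Hy. unfold ball in Hy. split; [apply H1|apply H2]; unfold ball;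
      pose proof (Rmin_l e1 e2); pose proof (Rmin_r e1 e2); lra.
  - intros x y W HW Wxy. destruct (HW _ Wxy) as [e [He Hb]].
    exists (ball w x (e/2)), (ball w y (e/2)). split; [apply ball_open|]. split; [apply ball_open|].
    split; [apply ball_center; lra|]. split; [apply ball_center; lra|].
    intros x' y' Hx Hy. apply Hb. unfold ball in *.
    replace (RN_sub (RN_add x' y') (RN_add x y)) with (RN_add (RN_sub x' x) (RN_sub y' y)) by (unfold RN_sub; rnext).
    pose proof (qw_add w (RN_sub x' x) (RN_sub y' y) Hw). lra.
  - intros t x W HW Wtx. destruct (HW _ Wtx) as [e [He Hb]].
    set (qx := qw w x). assert (Hqx : 0 <= qx) by (apply qw_nonneg; auto).
    set (r := Rmin 1 (e / (2 * (Rabs t + 1)))).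
    assert (Hr1 : r <= 1) by apply Rmin_l.
    assert (Hr2 : r <= e / (2 * (Rabs t + 1))) by apply Rmin_r.
    assert (Hrp : 0 < r). { apply Rmin_pos. lra. apply Rdiv_lt_0_compat. lra. pose proof (Rabs_pos t); lra. }
    exists (e / (2 * (qx + 2))), (ball w x r). split.
    { apply Rdiv_lt_0_compat; lra. } split; [apply ball_open|]. split; [apply ball_center; auto|].
    intros t' x' Ht Hx. apply Hb. unfold ball in *.
    replace (RN_sub (RN_scal t' x') (RN_scal t x)) with
      (RN_add (RN_scal (t' - t) x') (RN_scal t (RN_sub x' x))) by (unfold RN_sub; rnext).
    eapply Rle_lt_trans. apply qw_add; auto. rewrite !qw_scal.
    assert (Hqx' : qw w x' <= qx + 1).
    { replace x' with (RN_add (RN_sub x' x) x) by (unfold RN_sub; rnext).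
      pose proof (qw_add w (RN_sub x' x) x Hw). fold qx in H. lra. }
    assert (Hq0 : 0 <= qw w x') by (apply qw_nonneg; auto).
    assert (A1 : Rabs (t' - t) * qw w x' < e / 2).
    { assert (Rabs (t' - t) * qw w x' <= e / (2 * (qx + 2)) * (qx + 1)).
      { apply Rmult_le_compat; auto using Rabs_pos; lra. }
      assert (e / (2 * (qx + 2)) * (qx + 1) < e / 2).
      { unfold Rdiv. rewrite Rinv_mult. assert (0 < / (qx + 2)) by (apply Rinv_0_lt_compat; lra).
        assert ((qx + 1) * / (qx + 2) < 1).
        { apply (Rmult_lt_reg_r (qx + 2)). lra. rewrite Rmult_assoc, Rinv_l by lra. lra. }
        nra. }
      lra. }
    assert (A2 : Rabs t * qw w (RN_sub x' x) <= e / 2).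
    { assert (Rabs t * qw w (RN_sub x' x) <= Rabs t * (e / (2 * (Rabs t + 1)))).
      { apply Rmult_le_compat_l. apply Rabs_pos. pose proof (qw_nonneg w (RN_sub x' x) Hw). lra. }
      assert (Rabs t * (e / (2 * (Rabs t + 1))) <= e / 2).
      { pose proof (Rabs_pos t). unfold Rdiv. rewrite Rinv_mult.
        assert (Rabs t * / (Rabs t + 1) <= 1).
        { apply (Rmult_le_reg_r (Rabs t + 1)). lra. rewrite Rmult_assoc, Rinv_l by lra. lra. }
        assert (0 < / (Rabs t + 1)) by (apply Rinv_0_lt_compat; lra).
        nra. }
      lra. }
    lra.
  - intros U [O [HO [O0 OU]]]. destruct (HO _ O0) as [e [He Hb]].
    exists (ball w RN_zero e). split.
    + exists (ball w RN_zero e). split; [apply ball_open|]. split; auto. apply ball_center; auto.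
    + split; [|intros; apply OU, Hb; auto].
      intros x y t Hx Hy Ht. unfold ball in *. rewrite sub0 in *.
      eapply Rle_lt_trans. apply qw_add; auto. rewrite !qw_scal.
      rewrite (Rabs_right t) by lra. rewrite (Rabs_right (1 - t)) by lra. destruct Ht as [Ht1 Ht2]; destruct (Rle_lt_or_eq_dec 0 t Ht1); [nra|subst; lra].
  - intros U [O [HO [O0 OU]]]. destruct (HO _ O0) as [e [He Hb]].
    destruct (Hw0 e He) as [N HN]. exists N. intros n Hn. apply OU, Hb. unfold ball.
    rewrite sub0, qw_unit. specialize (HN n Hn). rewrite Rabs_right in HN; auto. apply Rle_ge, Hw.
Qed.
End TW.

Definition lcopen (p : ((RN -> Prop) -> Prop) * (RN -> Prop)) :=
  is_lc_vector_topology_en0 (fst p) /\ (fst p) (snd p).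

Lemma nu_open_list (l : list (((RN -> Prop) -> Prop) * (RN -> Prop))) :
  (forall p, In p l -> lcopen p) -> nu_open (fun x => forall p, In p l -> snd p x).
Proof.
  intros Hl x Hx. exists l. split; auto. intros p Hp. destruct (Hl p Hp). auto.
Qed.

Lemma lc_nu tau U : is_lc_vector_topology_en0 tau -> tau U -> nu_open U.
Proof.
  intros Ht HU x Ux. exists ((tau, U) :: nil). split.
  - intros p [<-|[]]; simpl; auto.
  - intros y Hy. apply (Hy (tau, U)); simpl; auto.
Qed.

Lemma tw_nu w U : nonneg w -> tendsto0 w -> tw w U -> nu_open U.
Proof. intros. eapply lc_nu; eauto. apply tw_lc; auto. Qed.

Lemma nu_True : nu_open (fun _ => True).
Proof. intros x _. exists nil. split; simpl; tauto. Qed.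

Lemma nu_inter U V : nu_open U -> nu_open V -> nu_open (fun x => U x /\ V x).
Proof.
  intros HU HV x [Ux Vx]. destruct (HU x Ux) as [l1 [H1 H1']]. destruct (HV x Vx) as [l2 [H2 H2']].
  exists (l1 ++ l2). split.
  - intros p Hp. apply in_app_or in Hp. destruct Hp; auto.
  - intros y Hy. split; [apply H1'|apply H2']; intros; apply Hy; apply in_or_app; auto.
Qed.

Lemma conv_pt (C : RN -> Prop) u v t z : convex_RN C -> C u -> C v -> 0 <= t <= 1 ->
  (forall n, RNv z n = t * RNv u n + (1 - t) * RNv v n) -> C z.
Proof.
  intros Hc Hu Hv Ht E. replace z with (RN_add (RN_scal t u) (RN_scal (1 - t) v)).
  apply Hc; auto. apply RN_ext; intros; simpl; rewrite E; ring.
Qed.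

Lemma unit_val k n : RNv (RN_unit k) n = if Nat.eqb n k then 1 else 0.
Proof. reflexivity. Qed.

Lemma conv_comb (C : RN -> Prop) (w : nat -> R) : convex_RN C -> C RN_zero -> (forall k, 0 < w k) ->
  (forall k, C (RN_scal (/ w k) (RN_unit k)) /\ C (RN_scal (- / w k) (RN_unit k))) ->
  forall M f, (forall n, (M <= n)%nat -> f n = 0) -> psum (fun k => w k * Rabs (f k)) M <= 1 ->
  forall z, (forall n, RNv z n = f n) -> C z.
Proof.
  intros Hc C0 Hw Hu M. induction M as [|M IH]; intros f Hf Hs z Ez.
  - replace z with RN_zero; auto. apply RN_ext; intros; rewrite Ez, Hf by lia; reflexivity.
  - simpl in Hs. set (a := w M * Rabs (f M)) in *.
    set (f' := fun n => if Nat.eqb n M then 0 else f n).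
    assert (Hf' : forall n, (M <= n)%nat -> f' n = 0).
    { intros n Hn. unfold f'. destruct (Nat.eqb_spec n M); auto. apply Hf; lia. }
    assert (Es : psum (fun k => w k * Rabs (f' k)) M = psum (fun k => w k * Rabs (f k)) M).
    { apply psum_ext. intros k Hk. unfold f'. destruct (Nat.eqb_spec k M); auto; lia. }
    set (s := psum (fun k => w k * Rabs (f k)) M) in *.
    assert (Hs0 : 0 <= s) by (apply psum_nonneg; intros; apply Rmult_le_pos; [apply Rlt_le, Hw|apply Rabs_pos]).
    assert (Ha0 : 0 <= a) by (apply Rmult_le_pos; [apply Rlt_le, Hw|apply Rabs_pos]).
    pose proof (Hw M) as HwM.
    destruct (Rle_dec 0 (f M)) as [Hpos|Hneg].
    + set (y := RN_scal (/ w M) (RN_unit M)). assert (Cy : C y) by apply Hu.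
      assert (EyM : a * (/ w M) = f M).
      { unfold a. rewrite Rabs_right by lra. field. lra. }
      destruct (Rlt_dec a 1) as [Ha1|Ha1].
      * set (g := fun n => f' n / (1 - a)).
        assert (Hg : forall n, (M <= n)%nat -> g n = 0). { intros n Hn; unfold g; rewrite Hf' by auto; field; lra. }
        assert (Cg : C (mkRN g M Hg)).
        { apply (IH g Hg). 2: reflexivity.
          rewrite (psum_ext _ (fun k => / (1 - a) * (w k * Rabs (f' k)))).
          - rewrite psum_scal, Es. apply (Rmult_le_reg_l (1 - a)). lra.
            rewrite <- Rmult_assoc, Rinv_r by lra. lra.
          - intros k _. unfold g, Rdiv. rewrite Rabs_mult, (Rabs_right (/ (1 - a))). ring.
            apply Rle_ge, Rlt_le, Rinv_0_lt_compat; lra. }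
        apply (conv_pt C (mkRN g M Hg) y (1 - a) z Hc Cg Cy). lra.
        intros n. rewrite Ez, RNv_mk. unfold y, g, f'. simpl. destruct (Nat.eqb_spec n M).
        -- subst n. rewrite <- EyM. field. lra.
        -- field. lra.
      * assert (s = 0) by lra.
        assert (Hz : forall k, (k < M)%nat -> f k = 0).
        { intros k Hk. pose proof (psum_zero_each (fun k => w k * Rabs (f k)) M) as P.
          assert (w k * Rabs (f k) = 0). { apply P; auto. intros; apply Rmult_le_pos; [apply Rlt_le, Hw|apply Rabs_pos]. }
          apply Rmult_integral in H0. destruct H0. pose proof (Hw k); lra. revert H0; unfold Rabs; destruct (Rcase_abs (f k)); lra. }
        replace z with y; auto. apply RN_ext. intros n. rewrite Ez. unfold y. simpl.
        destruct (Nat.eqb_spec n M).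
        -- subst. assert (a = 1) by lra. unfold a in H0. rewrite Rabs_right in H0 by lra.
           apply (Rmult_eq_reg_l (w M)). rewrite H0. field. lra. lra.
        -- destruct (Nat.lt_ge_cases n M). rewrite Hz by auto; ring. rewrite Hf by lia; ring.
    + set (y := RN_scal (- / w M) (RN_unit M)). assert (Cy : C y) by apply Hu.
      assert (EyM : a * (- / w M) = f M).
      { unfold a. rewrite Rabs_left by lra. field. lra. }
      destruct (Rlt_dec a 1) as [Ha1|Ha1].
      * set (g := fun n => f' n / (1 - a)).
        assert (Hg : forall n, (M <= n)%nat -> g n = 0). { intros n Hn; unfold g; rewrite Hf' by auto; field; lra. }
        assert (Cg : C (mkRN g M Hg)).
        { apply (IH g Hg). 2: reflexivity.
          rewrite (psum_ext _ (fun k => / (1 - a) * (w k * Rabs (f' k)))).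
          - rewrite psum_scal, Es. apply (Rmult_le_reg_l (1 - a)). lra.
            rewrite <- Rmult_assoc, Rinv_r by lra. lra.
          - intros k _. unfold g, Rdiv. rewrite Rabs_mult, (Rabs_right (/ (1 - a))). ring.
            apply Rle_ge, Rlt_le, Rinv_0_lt_compat; lra. }
        apply (conv_pt C (mkRN g M Hg) y (1 - a) z Hc Cg Cy). lra.
        intros n. rewrite Ez, RNv_mk. unfold y, g, f'. simpl. destruct (Nat.eqb_spec n M).
        -- subst n. rewrite <- EyM. field. lra.
        -- field. lra.
      * assert (s = 0) by lra.
        assert (Hz : forall k, (k < M)%nat -> f k = 0).
        { intros k Hk. pose proof (psum_zero_each (fun k => w k * Rabs (f k)) M) as P.
          assert (w k * Rabs (f k) = 0). { apply P; auto. intros; apply Rmult_le_pos; [apply Rlt_le, Hw|apply Rabs_pos]. }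
          apply Rmult_integral in H0. destruct H0. pose proof (Hw k); lra. revert H0; unfold Rabs; destruct (Rcase_abs (f k)); lra. }
        replace z with y; auto. apply RN_ext. intros n. rewrite Ez. unfold y. simpl.
        destruct (Nat.eqb_spec n M).
        -- subst. assert (a = 1) by lra. unfold a in H0. rewrite Rabs_left in H0 by lra.
           apply (Rmult_eq_reg_l (w M)). rewrite Rmult_1_r. field_simplify. lra. lra. lra.
        -- destruct (Nat.lt_ge_cases n M). rewrite Hz by auto; ring. rewrite Hf by lia; ring.
Qed.

Lemma nat_above r : exists M : nat, r < INR M.
Proof.
  destruct (archimed r) as [H1 _]. destruct (Z.lt_ge_cases (up r) 0).
  - exists O. simpl. apply IZR_lt in H. lra.
  - exists (Z.to_nat (up r)). rewrite INR_IZR_INZ, Z2Nat.id; auto; lia.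
Qed.

Fixpoint best (Nf : nat -> nat) (k j : nat) : nat :=
  match j with O => O | S j' => if Nat.leb (Nf (S j')) k then S j' else best Nf k j' end.

Lemma best_spec1 Nf k j : best Nf k j = O \/ ((Nf (best Nf k j) <= k)%nat /\ (best Nf k j <= j)%nat).
Proof.
  induction j; simpl; auto. destruct (Nat.leb_spec (Nf (S j)) k); auto.
  destruct IHj as [E|[E1 E2]]; [left; auto | right; split; [auto|lia]].
Qed.

Lemma best_spec2 Nf k j M : (1 <= M)%nat -> (M <= j)%nat -> (Nf M <= k)%nat -> (M <= best Nf k j)%nat.
Proof.
  induction j; simpl; intros; [lia|]. destruct (Nat.leb_spec (Nf (S j)) k); [lia|].
  destruct (Nat.eq_dec M (S j)); [subst; lia|]. apply IHj; auto; lia.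
Qed.

Lemma lc_weights tau V : is_lc_vector_topology_en0 tau -> tau V -> V RN_zero ->
  exists w, nonneg w /\ tendsto0 w /\ forall d, qw w d <= 1 -> V d.
Proof.
  intros [Htop [Hadd [Hsc [Hlc Hen]]]] HV V0.
  destruct (Hlc V) as [C [[OC [HOC [OC0 OCC]]] [Cconv CV]]].
  { exists V; auto. }
  assert (Hd : forall k, exists d, 0 < d /\ C (RN_scal d (RN_unit k)) /\ C (RN_scal (- d) (RN_unit k))).
  { intros k. destruct (Hsc 0 (RN_unit k) OC HOC) as [d [U [Hd [HU [Uk HU']]]]].
    { replace (RN_scal 0 (RN_unit k)) with RN_zero; auto. rnext. }
    exists (d / 2). split. lra. split; apply OCC, HU'; auto; rewrite Rminus_0_r.
    rewrite Rabs_right; lra. rewrite Rabs_left; lra. }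
  assert (HM : forall M : nat, exists N, forall n, (N <= n)%nat ->
            C (RN_scal (INR M) (RN_unit n)) /\ C (RN_scal (- INR M) (RN_unit n))).
  { intros M. assert (Z0 : forall t, RN_scal t RN_zero = RN_zero) by (intros; rnext).
    destruct (Hsc (INR M) RN_zero OC HOC) as [d1 [U1 [Hd1 [HU1 [U10 HU1']]]]]. rewrite Z0; auto.
    destruct (Hsc (- INR M) RN_zero OC HOC) as [d2 [U2 [Hd2 [HU2 [U20 HU2']]]]]. rewrite Z0; auto.
    destruct (Hen (fun x => U1 x /\ U2 x)) as [N HN].
    { exists (fun x => U1 x /\ U2 x). split. apply Htop; auto. split; auto. }
    exists N. intros n Hn. destruct (HN n Hn). split; apply OCC; [apply HU1'|apply HU2']; auto;
    unfold Rminus; rewrite Rplus_opp_r, Rabs_R0; auto. }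
  set (df := fun k => proj1_sig (constructive_indefinite_description _ (Hd k))).
  assert (dfs : forall k, 0 < df k /\ C (RN_scal (df k) (RN_unit k)) /\ C (RN_scal (- df k) (RN_unit k))).
  { intros k. unfold df. destruct (constructive_indefinite_description _ _); auto. }
  set (Nf := fun M => proj1_sig (constructive_indefinite_description _ (HM M))).
  assert (Nfs : forall M n, (Nf M <= n)%nat -> C (RN_scal (INR M) (RN_unit n)) /\ C (RN_scal (- INR M) (RN_unit n))).
  { intros M. unfold Nf. destruct (constructive_indefinite_description _ _); auto. }
  set (m := fun k => best Nf k k).
  set (lam := fun k => if Nat.eqb (m k) 0 then df k else INR (m k)).
  assert (lams : forall k, 0 < lam k /\ C (RN_scal (lam k) (RN_unit k)) /\ C (RN_scal (- lam k) (RN_unit k))).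
  { intros k. unfold lam. destruct (Nat.eqb_spec (m k) 0). apply dfs.
    destruct (best_spec1 Nf k k) as [E|[E1 E2]]. unfold m in n; lia.
    split. apply lt_0_INR; lia. apply Nfs. unfold m; lia. }
  exists (fun k => / lam k). split; [|split].
  - intros k. apply Rlt_le, Rinv_0_lt_compat, lams.
  - intros e He. destruct (nat_above (/ e)) as [M HM']. exists (Nat.max (Nf (S M)) (S M)).
    intros n Hn. assert (Hb : (S M <= m n)%nat) by (apply best_spec2; lia).
    assert (Hl : lam n = INR (m n)). { unfold lam. destruct (Nat.eqb_spec (m n) 0); auto; lia. }
    assert (Hl2 : INR (S M) <= lam n) by (rewrite Hl; apply le_INR; auto).
    rewrite S_INR in Hl2. assert (0 < / e) by (apply Rinv_0_lt_compat; auto).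
    rewrite Rabs_right. 2: apply Rle_ge, Rlt_le, Rinv_0_lt_compat, lams.
    replace e with (/ / e) by (field; lra). apply Rinv_lt_contravar. apply Rmult_lt_0_compat; lra. lra.
  - intros d Hq. apply CV.
    assert (P1 : forall k, 0 < / lam k) by (intros; apply Rinv_0_lt_compat, lams).
    assert (P2 : forall k, C (RN_scal (/ / lam k) (RN_unit k)) /\ C (RN_scal (- / / lam k) (RN_unit k))).
    { intros k; rewrite Rinv_inv. split; apply lams. }
    exact (conv_comb C (fun k => / lam k) Cconv (OCC _ OC0) P1 P2 (sb d) (RNv d) (sb_spec d) Hq d (fun n => eq_refl)).
Qed.

Lemma lc_weights_at tau O x : is_lc_vector_topology_en0 tau -> tau O -> O x ->
  exists w, nonneg w /\ tendsto0 w /\ forall z, qw w (RN_sub z x) <= 1 -> O z.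
Proof.
  intros Ht HO Ox. pose proof Ht as [Htop [Hadd _]].
  destruct (Hadd x RN_zero O HO) as [U [V [HU [HV [Ux [V0 HUV]]]]]].
  { replace (RN_add x RN_zero) with x; auto. rnext. }
  destruct (lc_weights tau V Ht HV V0) as [w [Hw [Hw0 HwV]]].
  exists w; split; auto; split; auto. intros z Hz.
  replace z with (RN_add x (RN_sub z x)) by (unfold RN_sub; rnext). apply HUV; auto.
Qed.

Lemma nonneg_plus w1 w2 : nonneg w1 -> nonneg w2 -> nonneg (fun k => w1 k + w2 k).
Proof. intros H1 H2 k. specialize (H1 k); specialize (H2 k); lra. Qed.
Lemma tendsto0_plus w1 w2 : nonneg w1 -> nonneg w2 -> tendsto0 w1 -> tendsto0 w2 -> tendsto0 (fun k => w1 k + w2 k).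
Proof.
  intros P1 P2 H1 H2 e He. destruct (H1 (e/2)) as [N1 HN1]. lra. destruct (H2 (e/2)) as [N2 HN2]. lra.
  exists (Nat.max N1 N2). intros n Hn. specialize (HN1 n ltac:(lia)). specialize (HN2 n ltac:(lia)).
  specialize (P1 n); specialize (P2 n). rewrite Rabs_right in * by lra. lra.
Qed.
Lemma qw_mono w1 w2 z : (forall k, w1 k <= w2 k) -> qw w1 z <= qw w2 z.
Proof. intros H. unfold qw, pse. apply psum_le. intros. pose proof (H k). pose proof (Rabs_pos (RNv z k)). nra. Qed.

Lemma nu_weights A x : nu_open A -> A x ->
  exists w, nonneg w /\ tendsto0 w /\ forall z, qw w (RN_sub z x) <= 1 -> A z.
Proof.
  intros HA Ax. destruct (HA x Ax) as [l [Hl HlA]].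
  assert (G : exists w, nonneg w /\ tendsto0 w /\ forall z, qw w (RN_sub z x) <= 1 -> forall p, In p l -> snd p z).
  { clear HlA. induction l as [|p l IH].
    - exists (fun _ => 0). split. intros k; lra. split. intros e He; exists O; intros; rewrite Rabs_R0; auto.
      intros z _ p [].
    - destruct IH as [w1 [P1 [T1 H1]]]. intros; apply Hl; simpl; auto.
      destruct (Hl p (or_introl eq_refl)) as [Hp1 [Hp2 Hp3]].
      destruct (lc_weights_at _ _ _ Hp1 Hp2 Hp3) as [w2 [P2 [T2 H2]]].
      exists (fun k => w1 k + w2 k). split. apply nonneg_plus; auto. split. apply tendsto0_plus; auto.
      intros z Hz q [<-|Hq].
      + apply H2. pose proof (qw_mono w2 (fun k => w1 k + w2 k) (RN_sub z x)). pose proof (qw_nonneg w1 (RN_sub z x) P1).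
        assert (qw w2 (RN_sub z x) <= qw (fun k => w1 k + w2 k) (RN_sub z x)) by (apply H; intros; specialize (P1 k); lra). lra.
      + apply H1; auto. assert (qw w1 (RN_sub z x) <= qw (fun k => w1 k + w2 k) (RN_sub z x)) by (apply qw_mono; intros; specialize (P2 k); lra). lra. }
  destruct G as [w [P [T G]]]. exists w; split; auto; split; auto.
Qed.

Section HS.
Variables (H : Type) (addH : H -> H -> H) (oppH : H -> H) (zeroH : H) (tauH : (H -> Prop) -> Prop).
Hypothesis HtopG : is_abelian_topgroup addH oppH zeroH tauH.
Variable h : R -> H.
Hypothesis hhom : forall a b, h (a + b) = addH (h a) (h b).
Hypothesis hcont : forall a W, tauH W -> W (h a) -> exists d, 0 < d /\ forall b, Rabs (b - a) < d -> W (h b).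

Let c0 := is_c0 zeroH tauH.
Let T := T_H2 h.

Lemma Hassoc a b c : addH a (addH b c) = addH (addH a b) c.
Proof. destruct HtopG as [[A _] _]; auto. Qed.
Lemma Hcomm a b : addH a b = addH b a.
Proof. destruct HtopG as [[_ [A _]] _]; auto. Qed.
Lemma Hid a : addH a zeroH = a.
Proof. destruct HtopG as [[_ [_ [A _]]] _]; auto. Qed.
Lemma Hinv a : addH a (oppH a) = zeroH.
Proof. destruct HtopG as [[_ [_ [_ A]]] _]; auto. Qed.
Lemma Htop : is_topology tauH.
Proof. destruct HtopG as [_ [A _]]; auto. Qed.
Lemma Hc2 : cont2 tauH addH.
Proof. destruct HtopG as [_ [_ [A _]]]; auto. Qed.
Lemma Hc1 : Defs.cont1 tauH oppH.
Proof. destruct HtopG as [_ [_ [_ A]]]; auto. Qed.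

Lemma Hzl a : addH zeroH a = a.
Proof. rewrite Hcomm; apply Hid. Qed.
Lemma Hcancel a b c : addH a b = addH a c -> b = c.
Proof.
  intros E. assert (E2 : addH (oppH a) (addH a b) = addH (oppH a) (addH a c)) by (rewrite E; auto).
  rewrite !Hassoc, (Hcomm (oppH a) a), Hinv, !Hzl in E2; auto.
Qed.
Lemma h0 : h 0 = zeroH.
Proof. apply (Hcancel (h 0)). rewrite <- hhom, Hid, Rplus_0_r; auto. Qed.
Lemma hopp a : h (- a) = oppH (h a).
Proof. apply (Hcancel (h a)). rewrite <- hhom, Hinv, Rplus_opp_r; apply h0. Qed.
Lemma Hopp_add a b : oppH (addH a b) = addH (oppH a) (oppH b).
Proof.
  apply (Hcancel (addH a b)). rewrite Hinv.
  rewrite <- Hassoc, (Hassoc b), (Hcomm b (oppH a)), <- (Hassoc (oppH a)), Hinv, Hid, Hinv; auto.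
Qed.
Lemma Hopp0 : oppH zeroH = zeroH.
Proof. apply (Hcancel zeroH). rewrite Hinv, Hid; auto. Qed.

Lemma nbhd_pt {X} (tau : (X -> Prop) -> Prop) x V : nbhd tau x V -> V x.
Proof. intros [O [_ [Ox OV]]]; auto. Qed.

Lemma nbhd_inter {X} (tau : (X -> Prop) -> Prop) x U V : is_topology tau -> nbhd tau x U -> nbhd tau x V ->
  nbhd tau x (fun y => U y /\ V y).
Proof.
  intros Ht [O1 [H1 [O1x O1U]]] [O2 [H2 [O2x O2V]]]. exists (fun y => O1 y /\ O2 y).
  split. apply Ht; auto. split; auto. intros y []; auto.
Qed.

Lemma open_nbhd {X} (tau : (X -> Prop) -> Prop) x O : tau O -> O x -> nbhd tau x O.
Proof. intros; exists O; auto. Qed.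

Lemma V_half V : nbhd tauH zeroH V -> exists V', nbhd tauH zeroH V' /\ forall a b, V' a -> V' b -> V (addH a b).
Proof.
  intros [O [HO [O0 OV]]]. destruct (Hc2 zeroH zeroH O HO) as [U1 [U2 [HU1 [HU2 [U10 [U20 HU]]]]]].
  rewrite Hid; auto. exists (fun y => U1 y /\ U2 y). split.
  apply nbhd_inter; [apply Htop| apply open_nbhd|apply open_nbhd]; auto.
  intros a b [] []; auto.
Qed.

Lemma V_opp V : nbhd tauH zeroH V -> exists V', nbhd tauH zeroH V' /\ forall a, V' a -> V (oppH a).
Proof.
  intros [O [HO [O0 OV]]]. destruct (Hc1 zeroH O HO) as [U [HU [U0 HUO]]]. rewrite Hopp0; auto.
  exists U; split; [apply open_nbhd|]; auto.
Qed.

Lemma c0_zero : c0 (fun _ => zeroH).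
Proof. intros U HU. exists O. intros. eapply nbhd_pt; eauto. Qed.

Lemma c0_add y z : c0 y -> c0 z -> c0 (fun n => addH (y n) (z n)).
Proof.
  intros Hy Hz U HU. destruct (V_half U HU) as [V [HV HVU]].
  destruct (Hy V HV) as [N1 H1]. destruct (Hz V HV) as [N2 H2].
  exists (Nat.max N1 N2). intros n Hn. apply HVU; [apply H1|apply H2]; lia.
Qed.

Lemma c0_opp y : c0 y -> c0 (fun n => oppH (y n)).
Proof.
  intros Hy U HU. destruct (V_opp U HU) as [V [HV HVU]].
  destruct (Hy V HV) as [N1 H1]. exists N1; intros; apply HVU, H1; auto.
Qed.

Lemma c0_T x : c0 (T x).
Proof.
  intros U HU. exists (sb x). intros n Hn. unfold T, T_H2. rewrite sb_spec, h0 by auto.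
  eapply nbhd_pt; eauto.
Qed.

Lemma T_add x y : T (RN_add x y) = fun n => addH (T x n) (T y n).
Proof. apply functional_extensionality; intros n. unfold T, T_H2; simpl. apply hhom. Qed.
Lemma T_opp x : T (RN_opp x) = fun n => oppH (T x n).
Proof. apply functional_extensionality; intros n. unfold T, T_H2; simpl. apply hopp. Qed.
Lemma T_zero : T RN_zero = fun _ => zeroH.
Proof. apply functional_extensionality; intros n. unfold T, T_H2; simpl. apply h0. Qed.

Definition IntS (S : (nat -> H) -> Prop) (b : nat -> H) :=
  exists V, nbhd tauH zeroH V /\ forall y, c0 y -> (forall n, V (y n)) -> S (fun n => addH (b n) (y n)).

Lemma IntS_open S : F0_open addH zeroH tauH (IntS S).
Proof.
  intros b Hb [V [HV HS]]. destruct (V_half V HV) as [V' [HV' HVV]].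
  exists V'. split; auto. intros y Hy HyV. exists V'. split; auto. intros z Hz HzV.
  replace (fun n => addH (addH (b n) (y n)) (z n)) with (fun n => addH (b n) (addH (y n) (z n))).
  apply HS. apply c0_add; auto. intros; apply HVV; auto.
  apply functional_extensionality; intros; apply Hassoc.
Qed.

Lemma IntS_sub S b : IntS S b -> S b.
Proof.
  intros [V [HV HS]]. specialize (HS (fun _ => zeroH) c0_zero (fun n => nbhd_pt _ _ _ HV)).
  replace b with (fun n => addH (b n) zeroH); auto. apply functional_extensionality; intros; apply Hid.
Qed.

Lemma F0_True : F0_open addH zeroH tauH (fun _ => True).
Proof.
  intros b _ _. exists (fun _ => True). split; auto. exists (fun _ => True). split. apply Htop. auto.
Qed.

Let tH := tau_TH addH zeroH tauH h.

Lemma mk_open A B : nu_open A -> F0_open addH zeroH tauH B -> tH (fun x => A x /\ B (T x)).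
Proof.
  intros HA HB. exists (fun a b => A a /\ B b). split; [|intros; tauto].
  intros a b Hb [Aa Bb]. exists A, B. repeat split; auto.
Qed.

Lemma tH_ext U U' : (forall x, U x <-> U' x) -> tH U' -> tH U.
Proof.
  intros E [W [HW HU]]. exists W. split; auto. intros x. rewrite E. apply HU.
Qed.

Lemma tH_decomp U x : tH U -> U x -> exists A B, nu_open A /\ A x /\ F0_open addH zeroH tauH B /\ B (T x) /\
  forall x', A x' -> B (T x') -> U x'.
Proof.
  intros [W [HW HU]] Ux. apply HU in Ux. destruct (HW x (T x) (c0_T x) Ux) as [A [B [HA [Ax [HB [Bx HAB]]]]]].
  exists A, B. repeat split; auto. intros x' A' B'. apply HU. apply HAB; auto. apply c0_T.
Qed.


Lemma F0_inter B1 B2 : F0_open addH zeroH tauH B1 -> F0_open addH zeroH tauH B2 ->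
  F0_open addH zeroH tauH (fun b => B1 b /\ B2 b).
Proof.
  intros H1 H2 b Hb [b1 b2]. destruct (H1 b Hb b1) as [V1 [HV1 P1]]. destruct (H2 b Hb b2) as [V2 [HV2 P2]].
  exists (fun a => V1 a /\ V2 a). split. apply nbhd_inter; auto. apply Htop.
  intros y Hy HyV. split; [apply P1|apply P2]; auto; intros n; apply HyV.
Qed.

Lemma tH_top : is_topology tH.
Proof.
  split; [|split].
  - apply (tH_ext _ (fun x => (fun _ => True) x /\ (fun _ => True) (T x))). tauto.
    exact (mk_open (fun _ => True) (fun _ => True) nu_True F0_True).
  - intros F HF.
    exists (fun a b => exists U, F U /\ exists W0, prod_open addH zeroH tauH W0 /\ (forall x, U x <-> W0 x (T x)) /\ W0 a b).
    split.
    + intros a b Hb [U [FU [W0 [HW0 [E Wab]]]]]. destruct (HW0 a b Hb Wab) as [A [B [HA [Aa [HB [Bb HAB]]]]]].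
      exists A, B. repeat split; auto. intros a' b' Hb' A' B'. exists U. split; auto. exists W0. split; [auto|split; [auto|apply HAB; auto]].
    + intros x. split.
      * intros [U [FU Ux]]. destruct (HF U FU) as [W0 [HW0 E]]. exists U. split; auto. exists W0.
        split; [auto|split; [auto|apply E; auto]].
      * intros [U [FU [W0 [HW0 [E Wx]]]]]. exists U. split; auto. apply E; auto.
  - intros U V [W1 [HW1 E1]] [W2 [HW2 E2]]. exists (fun a b => W1 a b /\ W2 a b). split.
    + intros a b Hb [w1 w2]. destruct (HW1 a b Hb w1) as [A1 [B1 [HA1 [A1a [HB1 [B1b P1]]]]]].
      destruct (HW2 a b Hb w2) as [A2 [B2 [HA2 [A2a [HB2 [B2b P2]]]]]].
      exists (fun z => A1 z /\ A2 z), (fun z => B1 z /\ B2 z). repeat split; auto.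
      apply nu_inter; auto. apply F0_inter; auto.
      apply P1; tauto. apply P2; tauto.
    + intros x. rewrite E1, E2. tauto.
Qed.

Lemma nu_cont2 x y A : nu_open A -> A (RN_add x y) ->
  exists A1 A2, nu_open A1 /\ nu_open A2 /\ A1 x /\ A2 y /\ forall x' y', A1 x' -> A2 y' -> A (RN_add x' y').
Proof.
  intros HA Axy. destruct (HA _ Axy) as [l [Hl HlA]].
  assert (G : exists l1 l2, (forall p, In p l1 -> lcopen p /\ snd p x) /\ (forall p, In p l2 -> lcopen p /\ snd p y) /\
     forall x' y', (forall p, In p l1 -> snd p x') -> (forall p, In p l2 -> snd p y') -> forall p, In p l -> snd p (RN_add x' y')).
  { clear HlA. induction l as [|p l IH].
    - exists nil, nil. repeat split; simpl; try tauto.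
    - specialize (IH ltac:(intros; apply Hl; simpl; auto)). destruct IH as [l1 [l2 [P1 [P2 P3]]]].
      destruct (Hl p (or_introl eq_refl)) as [Hp1 [Hp2 Hp3]].
      pose proof Hp1 as [_ [Hadd _]].
      destruct (Hadd x y (snd p) Hp2 Hp3) as [U [V [HU [HV [Ux [Vy HUV]]]]]].
      exists ((fst p, U) :: l1), ((fst p, V) :: l2). split; [|split].
      + intros q [<-|Hq]; [split; [split|]; simpl; auto|apply P1; auto].
      + intros q [<-|Hq]; [split; [split|]; simpl; auto|apply P2; auto].
      + intros x' y' Q1 Q2 q [<-|Hq].
        * apply HUV; [apply (Q1 (fst p, U))|apply (Q2 (fst p, V))]; simpl; auto.
        * apply P3; auto; intros; [apply Q1|apply Q2]; simpl; auto. }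
  destruct G as [l1 [l2 [P1 [P2 P3]]]].
  exists (fun z => forall p, In p l1 -> snd p z), (fun z => forall p, In p l2 -> snd p z).
  repeat split.
  - apply nu_open_list; intros; apply P1; auto.
  - apply nu_open_list; intros; apply P2; auto.
  - intros; apply P1; auto.
  - intros; apply P2; auto.
  - intros x' y' Q1 Q2. apply HlA. apply P3; auto.
Qed.

Lemma scal_m1 x : RN_scal (-1) x = RN_opp x.
Proof. rnext. Qed.

Lemma nu_cont1 x A : nu_open A -> A (RN_opp x) ->
  exists A1, nu_open A1 /\ A1 x /\ forall x', A1 x' -> A (RN_opp x').
Proof.
  intros HA Ax. destruct (HA _ Ax) as [l [Hl HlA]].
  assert (G : exists l1, (forall p, In p l1 -> lcopen p /\ snd p x) /\
     forall x', (forall p, In p l1 -> snd p x') -> forall p, In p l -> snd p (RN_opp x')).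
  { clear HlA. induction l as [|p l IH].
    - exists nil. repeat split; simpl; try tauto.
    - specialize (IH ltac:(intros; apply Hl; simpl; auto)). destruct IH as [l1 [P1 P3]].
      destruct (Hl p (or_introl eq_refl)) as [Hp1 [Hp2 Hp3]].
      pose proof Hp1 as [_ [_ [Hsc _]]].
      destruct (Hsc (-1) x (snd p) Hp2) as [d [U [Hd [HU [Ux HU']]]]]. rewrite scal_m1; auto.
      exists ((fst p, U) :: l1). split.
      + intros q [<-|Hq]; [split; [split|]; simpl; auto|apply P1; auto].
      + intros x' Q1 q [<-|Hq].
        * rewrite <- scal_m1. apply HU'. unfold Rminus; rewrite Rplus_opp_r, Rabs_R0; auto.
          apply (Q1 (fst p, U)); simpl; auto.
        * apply P3; auto; intros; apply Q1; simpl; auto. }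
  destruct G as [l1 [P1 P3]].
  exists (fun z => forall p, In p l1 -> snd p z). repeat split.
  - apply nu_open_list; intros; apply P1; auto.
  - intros; apply P1; auto.
  - intros x' Q1. apply HlA. apply P3; auto.
Qed.

Lemma Hswap a b c d : addH (addH a c) (addH b d) = addH (addH a b) (addH c d).
Proof.
  rewrite <- !Hassoc. f_equal. rewrite !Hassoc. f_equal. apply Hcomm.
Qed.

Lemma tH_cont2 : cont2 tH RN_add.
Proof.
  intros x y W HW Wxy. destruct (tH_decomp W _ HW Wxy) as [A [B [HA [Axy [HB [Bxy HAB]]]]]].
  destruct (nu_cont2 x y A HA Axy) as [A1 [A2 [HA1 [HA2 [A1x [A2y HA12]]]]]].
  destruct (HB _ (c0_T _) Bxy) as [V [HV HBV]].
  destruct (V_half V HV) as [V' [HV' HVV]].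
  set (S1 := fun (u : RN) b => exists z, c0 z /\ (forall n, V' (z n)) /\ b = fun n => addH (T u n) (z n)).
  assert (IS : forall u, IntS (S1 u) (T u)).
  { intros u. exists V'. split; auto. intros y0 Hy0 HyV. exists y0. auto. }
  exists (fun x' => A1 x' /\ IntS (S1 x) (T x')), (fun y' => A2 y' /\ IntS (S1 y) (T y')).
  repeat split; auto; try apply mk_open; auto; try apply IntS_open.
  intros x' y' [A1' I1] [A2' I2]. apply HAB. apply HA12; auto.
  apply IntS_sub in I1. apply IntS_sub in I2.
  destruct I1 as [z1 [Hz1 [Vz1 E1]]]. destruct I2 as [z2 [Hz2 [Vz2 E2]]].
  rewrite T_add, E1, E2.
  replace (fun n => addH (addH (T x n) (z1 n)) (addH (T y n) (z2 n))) with
    (fun n => addH (T (RN_add x y) n) (addH (z1 n) (z2 n))).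
  apply HBV. apply c0_add; auto. intros; apply HVV; auto.
  apply functional_extensionality; intros n. rewrite T_add. symmetry; apply Hswap.
Qed.

Lemma tH_cont1 : Defs.cont1 tH RN_opp.
Proof.
  intros x W HW Wx. destruct (tH_decomp W _ HW Wx) as [A [B [HA [Ax [HB [Bx HAB]]]]]].
  destruct (nu_cont1 x A HA Ax) as [A1 [HA1 [A1x HA1']]].
  destruct (HB _ (c0_T _) Bx) as [V [HV HBV]].
  destruct (V_opp V HV) as [V' [HV' HVV]].
  set (S1 := fun b => exists z, c0 z /\ (forall n, V' (z n)) /\ b = fun n => addH (T x n) (z n)).
  exists (fun x' => A1 x' /\ IntS S1 (T x')). repeat split; auto.
  - apply mk_open; auto; apply IntS_open.
  - exists V'. split; auto. intros y0 Hy0 HyV. exists y0. auto.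
  - intros x' [A1' I1]. apply HAB. apply HA1'; auto. apply IntS_sub in I1.
    destruct I1 as [z [Hz [Vz E]]]. rewrite T_opp, E.
    replace (fun n => oppH (addH (T x n) (z n))) with (fun n => addH (T (RN_opp x) n) (oppH (z n))).
    apply HBV. apply c0_opp; auto. intros; apply HVV; auto.
    apply functional_extensionality; intros n. rewrite T_opp, Hopp_add. auto.
Qed.

Lemma tH_group : is_group_topology RN_add RN_opp tH.
Proof. split; [apply tH_top|split; [apply tH_cont2|apply tH_cont1]]. Qed.

Lemma nu_tH U : nu_open U -> tH U.
Proof.
  intros HU. apply (tH_ext _ (fun x => U x /\ (fun _ => True) (T x))). tauto.
  exact (mk_open U (fun _ => True) HU F0_True).
Qed.

Lemma psum_geom M : psum (fun k => / 2 ^ (S k)) M = 1 - / 2 ^ M.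
Proof.
  induction M. simpl; field.
  replace (psum (fun k => / 2 ^ S k) (S M)) with (psum (fun k => / 2 ^ S k) M + / 2 ^ S M) by reflexivity.
  rewrite IHM. simpl. assert (0 < 2 ^ M) by (apply pow_lt; lra). field. lra.
Qed.

Lemma tH_box U : tH U -> box_open U.
Proof.
  intros HU x Ux. destruct (tH_decomp U x HU Ux) as [A [B [HA [Ax [HB [Bx HAB]]]]]].
  destruct (nu_weights A x HA Ax) as [w [Hw [Hw0 HwA]]].
  destruct (HB _ (c0_T _) Bx) as [V [[O [HO [O0 OV]]] HBV]].
  destruct (hcont 0 O HO) as [d [Hd Hhd]]. rewrite h0; auto.
  exists (fun n => Rmin d (/ ((w n + 1) * 2 ^ (S n)))). split.
  { intros n. apply Rmin_pos; auto. apply Rinv_0_lt_compat. apply Rmult_lt_0_compat.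
    specialize (Hw n); lra. apply pow_lt; lra. }
  intros y Hy. apply HAB.
  - apply HwA. rewrite (qw_eq w _ (Nat.max (sb y) (sb x))).
    2:{ intros n Hn. unfold RN_sub; simpl. rewrite !sb_spec by lia. ring. }
    eapply Rle_trans. apply (psum_le _ (fun k => / 2 ^ (S k))).
    + intros k _. simpl RNv. specialize (Hy k). pose proof (Rmin_r d (/ ((w k + 1) * 2 ^ (S k)))).
      assert (P : 0 < 2 ^ S k) by (apply pow_lt; lra). specialize (Hw k).
      assert (HH : Rabs (RNv y k + - RNv x k) <= / ((w k + 1) * 2 ^ (S k))) by (unfold Rminus in Hy; lra).
      rewrite Rinv_mult in HH.
      apply Rle_trans with (w k * (/ (w k + 1) * / 2 ^ S k)).
      { apply Rmult_le_compat_l; auto. }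
      rewrite <- Rmult_assoc. rewrite <- (Rmult_1_l (/ 2 ^ S k)) at 2.
      apply Rmult_le_compat_r. apply Rlt_le, Rinv_0_lt_compat; auto.
      apply (Rmult_le_reg_r (w k + 1)). lra. rewrite Rmult_assoc, Rinv_l by lra. lra.
    + rewrite psum_geom. assert (0 < / 2 ^ Nat.max (sb y) (sb x)) by (apply Rinv_0_lt_compat, pow_lt; lra). lra.
  - replace (T y) with (fun n => addH (T x n) (T (RN_sub y x) n)).
    apply HBV. apply c0_T. intros n. apply OV, Hhd. unfold T, T_H2, RN_sub; simpl.
    specialize (Hy n). pose proof (Rmin_l d (/ ((w n + 1) * 2 ^ (S n)))). rewrite Rminus_0_r. unfold Rminus in Hy. lra.
    apply functional_extensionality; intros n. unfold T, T_H2, RN_sub; simpl. rewrite <- hhom. f_equal; ring.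
Qed.

Lemma sin_abs_le u : Rabs (sin u) <= Rabs u.
Proof.
  assert (P : forall v, 0 < v -> Rabs (sin v) <= v).
  { intros v Hv. pose proof (sin_lt_x v Hv). pose proof (SIN_bound v). pose proof PI2_1.
    destruct (Rle_dec 1 v). unfold Rabs; destruct (Rcase_abs (sin v)); lra.
    assert (0 < sin v) by (apply sin_gt_0; lra). rewrite Rabs_right; lra. }
  destruct (Rtotal_order u 0) as [Hu|[Hu|Hu]].
  - replace u with (- - u) by ring. rewrite sin_neg, !Rabs_Ropp. rewrite (Rabs_left u) by lra. apply P; lra.
  - subst. rewrite sin_0; lra.
  - rewrite (Rabs_right u) by lra. apply P; auto.
Qed.

Lemma trig_dist a b : (cos a - cos b) ^ 2 + (sin a - sin b) ^ 2 <= (a - b) ^ 2.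
Proof.
  pose proof (sin2_cos2 a). pose proof (sin2_cos2 b). unfold Rsqr in *.
  assert (E : (cos a - cos b) ^ 2 + (sin a - sin b) ^ 2 = 2 - 2 * cos (a - b)) by (rewrite cos_minus; nra).
  rewrite E. replace (a - b) with (2 * ((a - b) / 2)) at 1 by field. rewrite cos_2a_sin.
  pose proof (sin_abs_le ((a - b) / 2)). pose proof (Rabs_pos (sin ((a - b) / 2))).
  assert (HS : Rsqr (sin ((a - b) / 2)) <= Rsqr ((a - b) / 2)) by (apply Rsqr_le_abs_1; apply sin_abs_le).
  unfold Rsqr in HS. nra.
Qed.

Lemma on_circle_cs a : on_circle (cos a, sin a).
Proof. unfold on_circle; simpl. pose proof (sin2_cos2 a) as E. unfold Rsqr in E. nra. Qed.

Lemma cmul_cs a b : cmul (cos a, sin a) (cos b, sin b) = (cos (a + b), sin (a + b)).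
Proof. unfold cmul; simpl. rewrite cos_plus, sin_plus. f_equal; ring. Qed.

Lemma char_lin F w K : nonneg w -> tendsto0 w -> 0 < K -> (forall x y, F (RN_add x y) = F x + F y) ->
  (forall z, Rabs (F z) <= K * qw w z) -> is_character RN_add nu_open (fun x => (cos (F x), sin (F x))).
Proof.
  intros Hw Hw0 HK Fadd Fb. split; [|split].
  - intros; apply on_circle_cs.
  - intros x y. rewrite Fadd. symmetry; apply cmul_cs.
  - intros x eps He. exists (ball w x (eps / K)). split. apply (tw_nu w); auto. apply ball_open; auto.
    split. apply ball_center. apply Rdiv_lt_0_compat; auto.
    intros y Hy. simpl. eapply Rle_lt_trans. apply trig_dist.
    assert (E : F y - F x = F (RN_sub y x)).
    { replace y with (RN_add (RN_sub y x) x) at 1 by (unfold RN_sub; rnext). rewrite Fadd; ring. }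
    rewrite E. unfold ball in Hy. specialize (Fb (RN_sub y x)).
    assert (HF : Rabs (F (RN_sub y x)) < eps).
    { apply Rle_lt_trans with (K * qw w (RN_sub y x)); auto.
      apply (Rmult_lt_reg_r (/ K)). apply Rinv_0_lt_compat; auto.
      rewrite Rmult_comm, <- Rmult_assoc, Rinv_l by lra. lra. }
    rewrite <- (Rabs_right eps) in HF by lra. apply Rsqr_lt_abs_1 in HF. unfold Rsqr in HF. nra.
Qed.

Lemma char_mono {G} (add : G -> G -> G) (tau1 tau2 : (G -> Prop) -> Prop) chi :
  (forall U, tau1 U -> tau2 U) -> is_character add tau1 chi -> is_character add tau2 chi.
Proof.
  intros Hm [C1 [C2 C3]]. split; [|split]; auto. intros x e He. destruct (C3 x e He) as [O [HO R]].
  exists O; split; auto.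
Qed.

Lemma absle a b : Rabs a <= b -> - b <= a <= b.
Proof. unfold Rabs; destruct (Rcase_abs a); lra. Qed.

Lemma abslt a b : Rabs a < b -> - b < a < b.
Proof. unfold Rabs; destruct (Rcase_abs a); lra. Qed.

Definition sg (r : R) : R := if Rle_dec 0 r then 1 else -1.
Lemma sg_mul r : sg r * r = Rabs r.
Proof. unfold sg. destruct (Rle_dec 0 r). rewrite Rabs_right; lra. rewrite Rabs_left; lra. Qed.
Lemma sg_abs r : Rabs (sg r) = 1.
Proof. unfold sg. destruct (Rle_dec 0 r). apply Rabs_R1. rewrite Rabs_left; lra. Qed.

Hypothesis Hlqc : locally_quasi_convex addH zeroH tauH.

Lemma tH_lqc : locally_quasi_convex RN_add RN_zero tH.
Proof.
  intros U [O [HO [O0 OU]]]. destruct (tH_decomp O RN_zero HO O0) as [A [B [HA [A0 [HB [B0 HAB]]]]]].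
  destruct (nu_weights A RN_zero HA A0) as [w [Hw [Hw0 HwA]]].
  destruct (HB _ (c0_T _) B0) as [V [HV HBV]].
  destruct (Hlqc V HV) as [V' [HV' [QV' V'V]]].
  exists (fun x => qw w x <= 1 /\ forall k, V' (h (RNv x k))). split; [|split].
  - exists (fun x => ball w RN_zero 1 x /\ IntS (fun b => forall n, V' (b n)) (T x)). split; [|split].
    + apply mk_open. apply (tw_nu w); auto. apply ball_open; auto. apply IntS_open.
    + split. apply ball_center; lra. exists V'. split; auto. intros y Hy HyV n. rewrite T_zero, Hzl; auto.
    + intros x [Bx Ix]. unfold ball in Bx; rewrite sub0 in Bx. split. lra.
      apply IntS_sub in Ix. exact Ix.
  - intros g Hg. destruct (classic (qw w g <= 1)) as [Hq|Hq].
    + assert (Hk : exists k, ~ V' (h (RNv g k))).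
      { apply not_all_ex_not. intros Hall; apply Hg; auto. }
      destruct Hk as [k Hk]. destruct (QV' _ Hk) as [psi [[P1 [P2 P3]] [P4 P5]]].
      exists (fun x => psi (h (RNv x k))). split; [split; [|split]|split]; auto.
      * intros x y; simpl. rewrite hhom; auto.
      * intros x e He. destruct (P3 (h (RNv x k)) e He) as [OH [HOH [OHx OHp]]].
        exists (fun x' => (fun _ => True) x' /\ (fun b => OH (b k)) (T x')). split; [|split].
        -- apply (mk_open (fun _ => True) (fun b => OH (b k))). apply nu_True. intros b Hb Bb.
           destruct (Hc2 (b k) zeroH OH HOH) as [U1 [U2 [HU1 [HU2 [U1b [U20 HU]]]]]]. rewrite Hid; auto.
           exists U2. split. apply open_nbhd; auto. intros y Hy HyV. apply HU; auto.
        -- split; auto.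
        -- intros y [_ Hy]. apply OHp; auto.
      * intros x [_ Hx]. apply P4; auto.
    + set (a := fun k => w k * sg (RNv g k)).
      set (p := qw w g).
      assert (Hp : lin a g = p).
      { unfold lin, p, qw, pse. apply psum_ext. intros k _. unfold a. rewrite <- sg_mul. ring. }
      set (c := if Rle_dec 2 p then PI / p else PI / 2).
      assert (Hc : 0 < c /\ c <= PI / 2 /\ PI / 2 < c * p /\ c * p <= PI).
      { pose proof PI_RGT_0. assert (Hp1 : 1 < p) by (unfold p; apply Rnot_le_lt; auto). unfold c. destruct (Rle_dec 2 p).
        - split. apply Rdiv_lt_0_compat; lra. split.
          + unfold Rdiv. apply Rmult_le_compat_l. lra. apply Rinv_le_contravar; lra.
          + replace (PI / p * p) with PI by (field; lra). lra.
        - apply Rnot_le_lt in n. assert (0 < PI * (p - 1)) by (apply Rmult_lt_0_compat; lra). assert (0 < PI * (2 - p)) by (apply Rmult_lt_0_compat; lra). split. lra. split. lra. split; lra. }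
      exists (fun x => (cos (c * lin a x), sin (c * lin a x))). split; [|split].
      * apply (char_mono _ nu_open). apply nu_tH.
        apply (char_lin (fun x => c * lin a x) w c); auto. lra.
        intros; rewrite lin_add; ring.
        intros z. rewrite Rabs_mult, Rabs_right by lra. apply Rmult_le_compat_l. lra.
        apply lin_bound. intros k; unfold a. rewrite Rabs_mult, sg_abs, Rabs_right. lra. apply Rle_ge, Hw.
      * intros x [Hx _]. unfold in_Splus; simpl. apply cos_ge_0.
        all: assert (HL : Rabs (lin a x) <= qw w x) by (apply lin_bound; intros k; unfold a; rewrite Rabs_mult, sg_abs, Rabs_right; [lra|apply Rle_ge, Hw]).
        all: apply absle in HL; destruct Hc as [Hc1 [Hc2' _]].
        nra. nra.
      * unfold in_Splus; simpl. rewrite Hp. destruct Hc as [_ [_ [Hc3 Hc4]]].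
        destruct (Rle_lt_or_eq_dec _ _ Hc4). assert (cos (c * p) < 0) by (apply cos_lt_0; lra). lra.
        rewrite e, cos_PI. lra.
  - intros x [Hx HxV]. apply OU, HAB.
    + apply HwA. rewrite sub0; auto.
    + replace (T x) with (fun n => addH (T RN_zero n) (T x n)).
      apply HBV. apply c0_T. intros n; apply V'V, HxV.
      apply functional_extensionality; intros n. rewrite T_zero, Hzl; auto.
Qed.

Lemma floor_ex u t : 0 < u -> 0 <= t -> exists m : nat, INR m * u <= t < (INR m + 1) * u.
Proof.
  intros Hu Ht. destruct (nat_above (t / u)) as [N HN].
  assert (HN' : t < INR N * u).
  { apply (Rmult_lt_compat_r u) in HN; auto. unfold Rdiv in HN. rewrite Rmult_assoc, Rinv_l in HN; lra. }
  clear HN. induction N.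
  - simpl in HN'. lra.
  - rewrite S_INR in HN'. destruct (Rlt_dec t (INR N * u)). apply IHN; auto.
    exists N. lra.
Qed.

Lemma small_zero d K : (forall n : nat, (1 <= n)%nat -> Rabs d <= K / INR n) -> d = 0.
Proof.
  intros Hd. destruct (Req_dec d 0); auto. exfalso.
  assert (Hp : 0 < Rabs d) by (apply Rabs_pos_lt; auto).
  destruct (nat_above (K / Rabs d)) as [N HN].
  specialize (Hd (S N) ltac:(lia)). rewrite S_INR in Hd. pose proof (pos_INR N).
  assert (K < Rabs d * (INR N + 1)).
  { apply (Rmult_lt_compat_r (Rabs d)) in HN; auto. unfold Rdiv in HN. rewrite Rmult_assoc, Rinv_l in HN; nra. }
  unfold Rdiv in Hd. apply (Rmult_le_compat_r (INR N + 1)) in Hd; [|lra].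
  rewrite Rmult_assoc, Rinv_l in Hd; lra.
Qed.

Lemma loc_lin (g : R -> R) D B : 0 < D ->
  (forall s t, Rabs s < D -> Rabs t < D -> Rabs (s + t) < D -> g (s + t) = g s + g t) ->
  (forall t, Rabs t < D -> Rabs (g t) <= B) ->
  forall t, Rabs t < D -> g t = t * (g (D / 2) / (D / 2)).
Proof.
  intros HD Hadd Hb.
  assert (g0 : g 0 = 0).
  { assert (E := Hadd 0 0). rewrite Rplus_0_r, Rabs_R0 in E. specialize (E HD HD HD). lra. }
  assert (Hmult : forall (j : nat) u, (forall i : nat, (i <= j)%nat -> Rabs (INR i * u) < D) -> g (INR j * u) = INR j * g u).
  { induction j; intros u Hi.
    - simpl. rewrite Rmult_0_l; lra.
    - rewrite S_INR. replace ((INR j + 1) * u) with (INR j * u + u) by ring.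
      rewrite Hadd. rewrite IHj. ring. intros; apply Hi; lia. apply Hi; lia.
      replace u with (INR 1 * u) at 1 by (simpl; ring). apply Hi; lia.
      replace (INR j * u + u) with (INR (S j) * u) by (rewrite S_INR; ring). apply Hi; lia. }
  set (c := D / 2). assert (Hc : 0 < c) by (unfold c; lra). assert (HcD : c < D) by (unfold c; lra).
  assert (Hpos : forall t, 0 <= t < D -> g t = t * (g c / c)).
  { intros t [Ht0 HtD].
    apply (Rplus_eq_reg_r (- (t * (g c / c)))). rewrite Rplus_opp_r.
    apply (small_zero _ (Rabs (g c) + B)). intros n Hn.
    assert (HnR : 1 <= INR n) by (apply (le_INR 1); auto).
    set (u := c / INR n). assert (Hu : 0 < u) by (unfold u; apply Rdiv_lt_0_compat; lra).
    assert (Hnu : INR n * u = c) by (unfold u; field; lra).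
    assert (Hu1 : u <= c) by (rewrite <- Hnu; nra).
    assert (Hgu : g c = INR n * g u).
    { rewrite <- Hnu at 1. apply Hmult. intros i Hi. apply le_INR in Hi. pose proof (pos_INR i).
      rewrite Rabs_right by nra. assert (INR i * u <= INR n * u) by nra. lra. }
    destruct (floor_ex u t Hu Ht0) as [m [Hm1 Hm2]]. pose proof (pos_INR m).
    set (r := t - INR m * u). assert (Hr : 0 <= r < u) by (unfold r; lra).
    assert (Hgm : g (INR m * u) = INR m * g u).
    { apply Hmult. intros i Hi. apply le_INR in Hi. pose proof (pos_INR i).
      rewrite Rabs_right by nra. assert (INR i * u <= INR m * u) by nra. lra. }
    assert (Hgt : g t = g (INR m * u) + g r).
    { replace t with (INR m * u + r) at 1 by (unfold r; ring). apply Hadd.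
      rewrite Rabs_right by nra; lra. rewrite Rabs_right; lra. unfold r. rewrite Rabs_right; lra. }
    assert (Hgr : Rabs (g r) <= B / INR n).
    { assert (Hnr : g (INR n * r) = INR n * g r).
      { apply Hmult. intros i Hi. apply le_INR in Hi. pose proof (pos_INR i).
        rewrite Rabs_right by nra. assert (INR i * r <= INR n * r) by nra. assert (INR n * r < INR n * u) by nra. lra. }
      assert (HB2 : Rabs (g (INR n * r)) <= B).
      { apply Hb. rewrite Rabs_right by nra. assert (INR n * r < INR n * u) by nra. lra. }
      rewrite Hnr, Rabs_mult, Rabs_right in HB2 by lra.
      apply (Rmult_le_reg_l (INR n)). lra. unfold Rdiv. rewrite <- Rmult_assoc, (Rmult_comm (INR n) B), Rmult_assoc, Rinv_r by lra. lra. }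
    assert (E : g t + - (t * (g c / c)) = g c * (- r / c) + g r).
    { rewrite Hgt, Hgm. replace (g u) with (g c / INR n) by (rewrite Hgu; field; lra).
      unfold r, u. field. lra. }
    rewrite E. eapply Rle_trans. apply Rabs_triang.
    assert (Rabs (g c * (- r / c)) <= Rabs (g c) / INR n).
    { rewrite Rabs_mult. unfold Rdiv. apply Rmult_le_compat_l. apply Rabs_pos.
      rewrite Rabs_mult, Rabs_Ropp, Rabs_right by lra. rewrite (Rabs_right (/ c)) by (apply Rle_ge, Rlt_le, Rinv_0_lt_compat; lra).
      apply (Rmult_le_reg_r c). lra. rewrite Rmult_assoc, Rinv_l by lra.
      replace (/ INR n * c) with u by (rewrite <- Hnu; field; lra). lra. }
    unfold Rdiv in *. lra. }
  intros t Ht. destruct (Rle_dec 0 t).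
  - apply Hpos. rewrite Rabs_right in Ht; lra.
  - assert (Hn : g (- t) = - t * (g c / c)) by (apply Hpos; rewrite Rabs_left in Ht; lra).
    assert (E : g (t + - t) = g t + g (- t)).
    { apply Hadd; auto. rewrite Rabs_Ropp; auto. rewrite Rplus_opp_r, Rabs_R0; lra. }
    rewrite Rplus_opp_r, g0, Hn in E. fold c. lra.
Qed.

Lemma tH_nbhd0 O : tH O -> O RN_zero -> exists w d, nonneg w /\ tendsto0 w /\ 0 < d /\
  forall z, qw w z <= 1 -> (forall k, Rabs (RNv z k) < d) -> O z.
Proof.
  intros HO O0. destruct (tH_decomp O RN_zero HO O0) as [A [B [HA [A0 [HB [B0 HAB]]]]]].
  destruct (nu_weights A RN_zero HA A0) as [w [Hw [Hw0 HwA]]].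
  destruct (HB _ (c0_T _) B0) as [V [[OV [HOV [OV0 OVV]]] HBV]].
  destruct (hcont 0 OV HOV) as [d [Hd Hhd]]. rewrite h0; auto.
  exists w, d. repeat split; auto. intros z Hz Hzd. apply HAB.
  - apply HwA. rewrite sub0; auto.
  - replace (T z) with (fun n => addH (T RN_zero n) (T z n)).
    apply HBV. apply c0_T. intros n. apply OVV, Hhd. rewrite Rminus_0_r; auto.
    apply functional_extensionality; intros n. rewrite T_zero, Hzl; auto.
Qed.

Definition cs (a : R) : R * R := (cos a, sin a).
Definition ang (p : R * R) : R := atan (snd p / fst p).

Lemma ang_spec p : on_circle p -> Rabs (snd p) < fst p ->
  cs (ang p) = p /\ Rabs (ang p) < PI / 4.
Proof.
  destruct p as [f s]. unfold on_circle, cs, ang; simpl. intros Hc Hl.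
  assert (Hf : 0 < f) by (pose proof (Rabs_pos s); lra).
  set (u := s / f).
  assert (E : 1 + u² = / f * / f) by (unfold u, Rsqr; field_simplify_eq; [nra|lra]).
  assert (Sq : sqrt (1 + u²) = / f) by (rewrite E; apply sqrt_square; apply Rlt_le, Rinv_0_lt_compat; auto).
  split.
  - rewrite cos_atan, sin_atan, Sq. f_equal; unfold u; field; lra.
  - assert (Hu : -1 < u < 1).
    { unfold u. apply Rlt_le in Hl as Hl'. apply absle in Hl'. destruct (Rabs_def2 _ _ Hl).
      split; [apply (Rmult_lt_reg_r f)|apply (Rmult_lt_reg_r f)]; auto; unfold Rdiv; rewrite Rmult_assoc, Rinv_l; lra. }
    pose proof (atan_increasing u 1 ltac:(lra)). pose proof (atan_increasing (-1) u ltac:(lra)).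
    assert (atan (-1) = - (PI / 4)) by (replace (-1) with (Ropp 1) by ring; rewrite atan_opp, atan_1; auto).
    rewrite atan_1 in *. apply Rabs_def1; lra.
Qed.

Lemma ang_eq a b : cos a = cos b -> sin a = sin b -> Rabs (a - b) < PI -> a = b.
Proof.
  intros Ec Es Hab. assert (S0 : sin (a - b) = 0) by (rewrite sin_minus, Ec, Es; ring).
  destruct (Rtotal_order (a - b) 0) as [L|[L|L]].
  - rewrite Rabs_left in Hab by lra. assert (sin (a - b) < 0) by (apply sin_lt_0_var; lra). lra.
  - lra.
  - rewrite Rabs_right in Hab by lra. assert (0 < sin (a - b)) by (apply sin_gt_0; lra). lra.
Qed.

Lemma cs_zero : cs 0 = (1, 0).
Proof. unfold cs; rewrite cos_0, sin_0; auto. Qed.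

Lemma chi_zero chi : is_character RN_add tH chi -> chi RN_zero = (1, 0).
Proof.
  intros [Ci [Ch _]]. specialize (Ch RN_zero RN_zero). replace (RN_add RN_zero RN_zero) with RN_zero in Ch by rnext.
  specialize (Ci RN_zero). destruct (chi RN_zero) as [p1 p2]. unfold cmul, on_circle in *; simpl in *.
  injection Ch; intros E2 E1.
  assert (p2 = 0).
  { destruct (Req_dec p2 0); auto. assert (p1 = 1/2).
    { apply (Rmult_eq_reg_l p2); auto. field_simplify. lra. }
    nra. }
  subst p2. f_equal. nra.
Qed.


Lemma compat chi : is_character RN_add tH chi -> is_character RN_add nu_open chi.
Proof.
  intros Hchi. pose proof Hchi as [Ci [Ch Cc]].
  assert (C0 := chi_zero chi Hchi).
  destruct (Cc RN_zero (1/2) ltac:(lra)) as [O [HO [O0 HOc]]].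
  destruct (tH_nbhd0 O HO O0) as [v [d [Hv [Hv0 [Hd HvO]]]]].
  set (Dm := fun z => qw v z <= 1 /\ forall k, Rabs (RNv z k) < d).
  assert (Good : forall z, Dm z -> Rabs (snd (chi z)) < fst (chi z)).
  { intros z [H1 H2]. specialize (HOc z (HvO z H1 H2)). rewrite C0 in HOc. simpl in HOc.
    destruct (chi z) as [f s]; simpl in *.
    pose proof (Rle_0_sqr s) as S1; pose proof (Rle_0_sqr (f - 1)) as S2; unfold Rsqr in S1, S2. assert (Q1 : (f - 1) * (f - 1) < 1 / 4) by nra. assert (Q2 : s * s < 1 / 4) by nra.
    assert (f > 1 / 2) by (destruct (Rle_dec f (1 / 2)); [nra|lra]).
    assert (s < 1 / 2) by (destruct (Rle_dec (1 / 2) s); [nra|lra]).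
    assert (- (1 / 2) < s) by (destruct (Rle_dec s (- (1 / 2))); [nra|lra]).
    apply Rabs_def1; lra. }
  set (ell := fun z => ang (chi z)).
  assert (Ell : forall z, Dm z -> chi z = cs (ell z) /\ Rabs (ell z) < PI / 4).
  { intros z Hz. destruct (ang_spec (chi z) (Ci z) (Good z Hz)). split; auto. }
  assert (EllAdd : forall x y, Dm x -> Dm y -> Dm (RN_add x y) -> ell (RN_add x y) = ell x + ell y).
  { intros x y Hx Hy Hxy. destruct (Ell _ Hx) as [E1 B1]. destruct (Ell _ Hy) as [E2 B2]. destruct (Ell _ Hxy) as [E3 B3].
    rewrite Ch, E1, E2 in E3. unfold cs in E3. rewrite cmul_cs in E3. injection E3; intros Es Ec.
    apply ang_eq; auto. apply abslt in B1. apply abslt in B2. apply abslt in B3. pose proof PI_RGT_0.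
    apply Rabs_def1; lra. }
  set (dk := fun k => Rmin d (/ (v k + 1))).
  assert (Hdk : forall k, 0 < dk k).
  { intros k. apply Rmin_pos; auto. apply Rinv_0_lt_compat. specialize (Hv k); lra. }
  assert (Dline : forall k t, Rabs t < dk k -> Dm (RN_scal t (RN_unit k))).
  { intros k t Ht. pose proof (Rmin_l d (/ (v k + 1))). pose proof (Rmin_r d (/ (v k + 1))). fold (dk k) in H0, H1.
    specialize (Hv k). split.
    - rewrite qw_scal, qw_unit. assert (Rabs t * (v k + 1) < 1).
      { apply Rlt_le_trans with (/ (v k + 1) * (v k + 1)). apply Rmult_lt_compat_r; lra.
        rewrite Rinv_l; lra. }
      pose proof (Rabs_pos t). nra.
    - intros n. simpl. destruct (Nat.eqb n k); [rewrite Rmult_1_r|rewrite Rmult_0_r, Rabs_R0]; lra. }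
  set (a := fun k => ell (RN_scal (dk k / 2) (RN_unit k)) / (dk k / 2)).
  assert (Lin : forall k t, Rabs t < dk k -> ell (RN_scal t (RN_unit k)) = t * a k).
  { intros k. apply (loc_lin (fun t => ell (RN_scal t (RN_unit k))) (dk k) (PI / 4)); auto.
    - intros s t Hs Ht Hst.
      assert (Eq : RN_scal (s + t) (RN_unit k) = RN_add (RN_scal s (RN_unit k)) (RN_scal t (RN_unit k))) by rnext.
      rewrite Eq. apply EllAdd; try apply Dline; auto. rewrite <- Eq; apply Dline; auto.
    - intros t Ht. apply Rlt_le, Ell, Dline; auto. }
  assert (Cline_small : forall k t, Rabs t < dk k -> chi (RN_scal t (RN_unit k)) = cs (a k * t)).
  { intros k t Ht. destruct (Ell _ (Dline k t Ht)) as [E _]. rewrite E, Lin, Rmult_comm; auto. }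
  assert (Cline : forall k t, chi (RN_scal t (RN_unit k)) = cs (a k * t)).
  { intros k t. destruct (nat_above (Rabs t / dk k)) as [n Hn].
    assert (Hn0 : 0 < INR n).
    { pose proof (Rabs_pos t). assert (0 <= Rabs t / dk k) by (apply Rmult_le_pos; auto; apply Rlt_le, Rinv_0_lt_compat, Hdk). lra. }
    set (s := t / INR n).
    assert (Hs : Rabs s < dk k).
    { unfold s, Rdiv. rewrite Rabs_mult, (Rabs_right (/ INR n)) by (apply Rle_ge, Rlt_le, Rinv_0_lt_compat; auto).
      apply (Rmult_lt_reg_r (INR n)); auto. rewrite Rmult_assoc, Rinv_l by lra.
      apply (Rmult_lt_compat_r (dk k)) in Hn; auto. unfold Rdiv in Hn. rewrite Rmult_assoc, Rinv_l in Hn; pose proof (Hdk k); lra. }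
    assert (Pw : forall j : nat, chi (RN_scal (INR j * s) (RN_unit k)) = cs (a k * (INR j * s))).
    { induction j.
      - simpl. replace (RN_scal (0 * s) (RN_unit k)) with RN_zero by rnext.
        rewrite C0, Rmult_0_l, Rmult_0_r, cs_zero; auto.
      - rewrite S_INR.
        replace (RN_scal ((INR j + 1) * s) (RN_unit k)) with (RN_add (RN_scal (INR j * s) (RN_unit k)) (RN_scal s (RN_unit k))) by rnext.
        rewrite Ch, IHj, Cline_small by auto. unfold cs. rewrite cmul_cs. f_equal; f_equal; ring. }
    replace t with (INR n * s) by (unfold s; field; lra). apply Pw. }
  assert (Ha0 : tendsto0 a).
  { intros eps He. apply NNPP. intros Hno.
    assert (Inf : forall N, exists k, (N <= k)%nat /\ eps <= Rabs (a k)).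
    { intros N. apply NNPP; intros Hk. apply Hno. exists N. intros n Hn. apply Rnot_le_lt. intros Hle. apply Hk. exists n; auto. }
    set (s := Rmin d 1 / 2).
    assert (Hs : 0 < s /\ s < d /\ s <= 1 / 2).
    { pose proof (Rmin_l d 1). pose proof (Rmin_r d 1). assert (0 < Rmin d 1) by (apply Rmin_pos; lra). unfold s; lra. }
    destruct (nat_above (PI / 4 / (eps * s))) as [m0 Hm0]. set (m := S m0).
    assert (Hm : 1 <= INR m) by (apply (le_INR 1); unfold m; lia).
    set (eta := / INR m).
    assert (Heta : 0 < eta /\ INR m * eta = 1 /\ eta <= 1).
    { unfold eta. split. apply Rinv_0_lt_compat; lra. split. field; lra.
      rewrite <- Rinv_1. apply Rinv_le_contravar; lra. }
    assert (Step : forall j : nat, (j <= m)%nat -> exists x, Dm x /\ qw v x <= INR j * eta /\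
              INR j * (eps * s) <= ell x /\ exists N, forall n, (N <= n)%nat -> RNv x n = 0).
    { induction j; intros Hj.
      - exists RN_zero. split; [|split; [|split]].
        + split. rewrite qw_zero; lra. intros k; simpl; rewrite Rabs_R0; auto.
        + rewrite qw_zero; simpl; lra.
        + unfold ell, ang. rewrite C0. simpl. replace (0 / 1) with 0 by field. rewrite atan_0. lra.
        + exists 0%nat; auto.
      - destruct (IHj ltac:(lia)) as [x [Dx [Qx [Lx [N HN]]]]].
        destruct (Hv0 eta (proj1 Heta)) as [N1 HN1].
        destruct (Inf (Nat.max N N1)) as [k [Hk Hak]].
        assert (Hvk : v k < eta) by (specialize (HN1 k ltac:(lia)); rewrite Rabs_right in HN1; auto; apply Rle_ge, Hv).
        set (y := RN_scal (s * sg (a k)) (RN_unit k)).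
        assert (Habs : Rabs (s * sg (a k)) = s) by (rewrite Rabs_mult, sg_abs, Rabs_right; lra).
        assert (Hsy : Rabs (s * sg (a k)) < dk k).
        { rewrite Habs. unfold dk. apply Rmin_glb_lt. lra.
          assert (/ 2 < / (v k + 1)) by (apply Rinv_lt_contravar; specialize (Hv k); lra). lra. }
        assert (Dy := Dline k _ Hsy).
        assert (Qy : qw v y = s * v k) by (unfold y; rewrite qw_scal, qw_unit, Habs; auto).
        assert (Qxy : qw v (RN_add x y) <= INR (S j) * eta).
        { eapply Rle_trans. apply qw_add; auto. rewrite Qy, S_INR. assert (s * v k <= eta) by (specialize (Hv k); nra). lra. }
        assert (Dxy : Dm (RN_add x y)).
        { split. assert (INR (S j) * eta <= 1).
          { rewrite <- (proj1 (proj2 Heta)). apply Rmult_le_compat_r. lra. apply le_INR; auto. } lra.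
          intros n. unfold y; simpl. destruct (Nat.eqb_spec n k).
          - subst n. rewrite HN by lia. rewrite Rmult_1_r, Rplus_0_l, Habs. lra.
          - rewrite Rmult_0_r, Rplus_0_r. apply Dx. }
        exists (RN_add x y). split; [auto|split; [auto|split]].
        + rewrite EllAdd; auto. unfold y. rewrite Lin by auto.
          replace (s * sg (a k) * a k) with (s * Rabs (a k)) by (rewrite <- sg_mul; ring).
          rewrite S_INR. assert (eps * s <= s * Rabs (a k)) by nra. lra.
        + exists (Nat.max N (S k)). intros n Hn. unfold y; simpl. rewrite HN by lia.
          destruct (Nat.eqb_spec n k); [lia|ring]. }
    destruct (Step m (le_n m)) as [x [Dx [_ [Lx _]]]]. destruct (Ell x Dx) as [_ Bx].
    apply abslt in Bx. unfold m in Lx. rewrite S_INR in Lx.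
    assert (PI / 4 < INR m0 * (eps * s)).
    { apply (Rmult_lt_compat_r (eps * s)) in Hm0. unfold Rdiv in Hm0. rewrite Rmult_assoc, Rinv_l in Hm0. lra.
      apply Rgt_not_eq, Rmult_lt_0_compat; lra. apply Rmult_lt_0_compat; lra. }
    assert (0 < eps * s) by (apply Rmult_lt_0_compat; lra). lra. }
  assert (Glob : forall M f, (forall n, (M <= n)%nat -> f n = 0) -> forall z, (forall n, RNv z n = f n) ->
            chi z = cs (psum (fun k => a k * f k) M)).
  { induction M; intros f Hf z Ez.
    - replace z with RN_zero by (apply RN_ext; intros; rewrite Ez, Hf by lia; reflexivity). simpl. rewrite C0, cs_zero; auto.
    - set (f' := fun n => if Nat.eqb n M then 0 else f n).
      assert (Hf' : forall n, (M <= n)%nat -> f' n = 0).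
      { intros n Hn. unfold f'. destruct (Nat.eqb_spec n M); auto. apply Hf; lia. }
      assert (Ez2 : z = RN_add (mkRN f' M Hf') (RN_scal (f M) (RN_unit M))).
      { apply RN_ext; intros n; rewrite Ez; simpl; unfold f'. destruct (Nat.eqb_spec n M); [subst; ring|ring]. }
      rewrite Ez2, Ch, (IHM f' Hf' (mkRN f' M Hf') (fun n => eq_refl)), Cline. unfold cs. rewrite cmul_cs.
      replace (psum (fun k => a k * f' k) M) with (psum (fun k => a k * f k) M).
      reflexivity. apply psum_ext. intros k Hk. unfold f'. destruct (Nat.eqb_spec k M); [lia|auto]. }
  assert (CF : forall z, chi z = cs (lin a z)).
  { intros z. rewrite (Glob (sb z) (RNv z) (sb_spec z) z (fun n => eq_refl)). rewrite (lin_eq a z (sb z)); auto. apply sb_spec. }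
  replace chi with (fun x => (cos (lin a x), sin (lin a x))) by (apply functional_extensionality; intros; rewrite CF; reflexivity).
  apply (char_lin (lin a) (fun k => Rabs (a k)) 1).
  - intros k; apply Rabs_pos.
  - intros e He. destruct (Ha0 e He) as [N HN]. exists N. intros; rewrite Rabs_Rabsolu; auto.
  - lra.
  - apply lin_add.
  - intros z. rewrite Rmult_1_l. apply lin_bound. intros; lra.
Qed.
End HS.

Theorem mainTheorem5
  (H : Type) (addH : H -> H -> H) (oppH : H -> H) (zeroH : H)
  (tauH : (H -> Prop) -> Prop)
  (HtopG : is_abelian_topgroup addH oppH zeroH tauH)
  (Hlqc : locally_quasi_convex addH zeroH tauH)
  (h : R -> H)
  (hhom : forall a b, h (a + b) = addH (h a) (h b))
  (hcont : forall a W, tauH W -> W (h a) ->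
             exists d, 0 < d /\ forall b, Rabs (b - a) < d -> W (h b)) :
  let tH := tau_TH addH zeroH tauH h in
  is_group_topology RN_add RN_opp tH /\
  locally_quasi_convex RN_add RN_zero tH /\
  (forall U, tH U -> box_open U) /\
  (forall U, nu_open U -> tH U) /\
  (forall chi : RN -> R * R, is_character RN_add tH chi <-> is_character RN_add nu_open chi).
Proof.
  intros tH. split; [|split; [|split; [|split]]].
  - exact (tH_group H addH oppH zeroH tauH HtopG h hhom).
  - exact (tH_lqc H addH oppH zeroH tauH HtopG h hhom Hlqc).
  - exact (tH_box H addH oppH zeroH tauH HtopG h hhom hcont).
  - exact (nu_tH H addH oppH zeroH tauH HtopG h).
  - intros chi. split.
    + exact (compat H addH oppH zeroH tauH HtopG h hhom hcont chi).
    + apply char_mono. exact (nu_tH H addH oppH zeroH tauH HtopG h).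
Qed.
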